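(* For every $n\in\mathbb{N}_0$ and every $x\in\mathbb{R}^3$ with $r=|x|$, $$|\mathbf{X}^{l,\dagger}_n(x)|\le\tfrac12(n+1)\sqrt{\tfrac{(n+1+l)!}{(n+1-l)!}}\,r^n\quad(l=0,\ldots,n+1),\qquad |\mathbf{Y}^{m,\dagger}_n(x)|\le\tfrac12(n+1)\sqrt{\tfrac{(n+1+m)!}{(n+1-m)!}}\,r^n\quad(m=1,\ldots,n+1).$$
   Context: Quaternions $\mathbb{H}$ have basis $1,\mathbf{e}_1,\mathbf{e}_2,\mathbf{e}_3$ with the usual Hamilton multiplication; $|\mathbf{a}|$ is the Euclidean norm in $\mathbb{R}^4$. Reduced quaternions: $\mathcal{A}=\mathrm{span}_\mathbb{R}\{1,\mathbf{e}_1,\mathbf{e}_2\}$; $x=(x_0,x_1,x_2)\in\mathbb{R}^3$ is identified with $x_0+x_1\mathbf{e}_1+x_2\mathbf{e}_2$. $\overline{D}=\partial_{x_0}-\mathbf{e}_1\partial_{x_1}-\mathbf{e}_2\partial_{x_2}$. Spherical coordinates: $x_0=r\cos\theta_1$, $x_1=r\sin\theta_1\cos\theta_2$, $x_2=r\sin\theta_1\sin\theta_2$. $P^m_n(t)=(1-t^2)^{m/2}\frac{d^m}{dt^m}P_n(t)$ is the associated Legendre function ($P_n$ the Legendre polynomial); $T_k,U_k$ are Chebyshev polynomials of first and second kind. Spherical harmonics: $U^l_{n}=P^l_{n}(\cos\theta_1)T_l(\cos\theta_2)$, $V^m_{n}=P^m_{n}(\cos\theta_1)\sin\theta_2\,U_{m-1}(\cos\theta_2)$.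 Basis polynomials: $\mathbf{X}^{l,\dagger}_n:=\tfrac12\overline{D}\big(r^{n+1}U^l_{n+1}\big)$, $l=0,\ldots,n+1$, and $\mathbf{Y}^{m,\dagger}_n:=\tfrac12\overline{D}\big(r^{n+1}V^m_{n+1}\big)$, $m=1,\ldots,n+1$. *)

(* Defs.v *)
From Stdlib Require Import Reals Lra List Arith Factorial.
Open Scope R_scope.

(** Polynomials with real coefficients as coefficient lists (lowest degree first). *)
Definition rpoly := list R.

Fixpoint padd (p q : rpoly) : rpoly :=
  match p with
  | nil => q
  | cons a p' => match q with
                 | nil => p
                 | cons b q' => cons (a + b) (padd p' q')
                 end
  end.

Definition pscale (c : R) (p : rpoly) : rpoly := map (Rmult c) p.
Definition pmulX (p : rpoly) : rpoly := cons 0 p.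
Definition peval (p : rpoly) (t : R) : R := fold_right (fun a acc => a + t * acc) 0 p.

Fixpoint pderiv_aux (k : nat) (p : rpoly) : rpoly :=
  match p with
  | nil => nil
  | cons a p' => cons (INR k * a) (pderiv_aux (S k) p')
  end.
Definition pderiv (p : rpoly) : rpoly :=
  match p with nil => nil | cons _ p' => pderiv_aux 1 p' end.

(** Legendre polynomials via Bonnet's recurrence:
    (k+2) P_{k+2} = (2k+3) t P_{k+1} - (k+1) P_k ;  leg_pair n = (P_n, P_{n+1}) *)
Fixpoint leg_pair (n : nat) : rpoly * rpoly :=
  match n with
  | O => (cons 1 nil, cons 0 (cons 1 nil))
  | S k => let (p, q) := leg_pair k in
           (q, pscale (/ INR (k + 2))
                 (padd (pscale (INR (2 * k + 3)) (pmulX q)) (pscale (- INR (k + 1)) p)))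
  end.
Definition legendre (n : nat) : rpoly := fst (leg_pair n).

Definition assocLegendre (n m : nat) (t : R) : R :=
  (sqrt (1 - t ^ 2)) ^ m * peval (Nat.iter m pderiv (legendre n)) t.

Fixpoint cheb_pair (a0 a1 t : R) (k : nat) : R * R :=
  match k with
  | O => (a0, a1)
  | S k' => let (a, b) := cheb_pair a0 a1 t k' in (b, 2 * t * b - a)
  end.
Definition chebT (k : nat) (t : R) : R := fst (cheb_pair 1 t t k).
Definition chebU (k : nat) (t : R) : R := fst (cheb_pair 1 (2 * t) t k).

(** spherical coordinates of x = (x0,x1,x2):
    r = |x|, cos th1 = x0/r, sin th1 = rho/r, cos th2 = x1/rho, sin th2 = x2/rho,
    rho = sqrt(x1^2+x2^2).  (At r = 0 or rho = 0 the angles are undefined; the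
    products below are then the continuous (polynomial) extensions.) *)
Definition rad (x0 x1 x2 : R) : R := sqrt (x0 ^ 2 + x1 ^ 2 + x2 ^ 2).
Definition rho (x1 x2 : R) : R := sqrt (x1 ^ 2 + x2 ^ 2).
Definition cos_th1 (x0 x1 x2 : R) : R := x0 / rad x0 x1 x2.
Definition cos_th2 (x1 x2 : R) : R := x1 / rho x1 x2.
Definition sin_th2 (x1 x2 : R) : R := x2 / rho x1 x2.

Definition Usph (n l : nat) (x0 x1 x2 : R) : R :=
  assocLegendre n l (cos_th1 x0 x1 x2) * chebT l (cos_th2 x1 x2).
Definition Vsph (n m : nat) (x0 x1 x2 : R) : R :=
  assocLegendre n m (cos_th1 x0 x1 x2) * sin_th2 x1 x2 * chebU (m - 1) (cos_th2 x1 x2).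

Definition solidU (n l : nat) (x0 x1 x2 : R) : R := rad x0 x1 x2 ^ n * Usph n l x0 x1 x2.
Definition solidV (n m : nat) (x0 x1 x2 : R) : R := rad x0 x1 x2 ^ n * Vsph n m x0 x1 x2.

(** Quaternions as 4-tuples of coordinates w.r.t. 1, e1, e2, e3; Euclidean norm. *)
Definition quat : Type := (R * R * R * R)%type.
Definition qnorm (q : quat) : R :=
  match q with (a, b, c, d) => sqrt (a ^ 2 + b ^ 2 + c ^ 2 + d ^ 2) end.
Definition qscale (s : R) (q : quat) : quat :=
  match q with (a, b, c, d) => (s * a, s * b, s * c, s * d) end.

(** Dbar f = d0 f - e1 d1 f - e2 d2 f for a real valued f whose partial
    derivatives at the point are d0, d1, d2. *)
Definition Dbar_val (d0 d1 d2 : R) : quat := (d0, - d1, - d2, 0).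

(* Main.v *)
Require Import Defs.
From Stdlib Require Import Reals Arith Factorial Lra Lia Psatz List ClassicalEpsilon.
Open Scope R_scope.

Notation dpl := derivable_pt_lim.

Lemma dpl_ext f g x l : (forall t, f t = g t) -> dpl f x l -> dpl g x l.
Proof.
  intros E H eps Heps. destruct (H eps Heps) as [d Hd]. exists d.
  intros h h0 hd. rewrite <- !E. apply Hd; auto.
Qed.

Lemma dpl_eq f x l l' : dpl f x l -> l = l' -> dpl f x l'.
Proof. intros H ->; exact H. Qed.

Lemma dcst a x : dpl (fun _ => a) x 0.
Proof. exact (derivable_pt_lim_const a x). Qed.

Lemma did x : dpl (fun t => t) x 1.
Proof. exact (derivable_pt_lim_id x). Qed.

Lemma dplus f g x a b : dpl f x a -> dpl g x b -> dpl (fun t => f t + g t) x (a + b).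
Proof. intros; apply (derivable_pt_lim_plus f g); auto. Qed.

Lemma dminus f g x a b : dpl f x a -> dpl g x b -> dpl (fun t => f t - g t) x (a - b).
Proof. intros; apply (derivable_pt_lim_minus f g); auto. Qed.

Lemma dmul f g x a b : dpl f x a -> dpl g x b -> dpl (fun t => f t * g t) x (a * g x + f x * b).
Proof. intros; apply (derivable_pt_lim_mult f g); auto. Qed.

Lemma dcomp f g x a b : dpl g x b -> dpl f (g x) a -> dpl (fun t => f (g t)) x (a * b).
Proof. intros; apply (derivable_pt_lim_comp g f); auto. Qed.

Lemma dpow f x a n : dpl f x a -> dpl (fun t => f t ^ n) x (INR n * f x ^ pred n * a).
Proof. intros H. apply (dcomp (fun y => y ^ n) f x); auto. apply derivable_pt_lim_pow. Qed.

Lemma dsqrt f x a : 0 < f x -> dpl f x a -> dpl (fun t => sqrt (f t)) x (a / (2 * sqrt (f x))).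
Proof. intros Hp H. eapply dpl_eq. apply (dcomp sqrt f x (/ (2 * sqrt (f x))) a H).
  apply derivable_pt_lim_sqrt; auto.
  unfold Rdiv; ring. Qed.

Lemma ddiv f g x a b : g x <> 0 -> dpl f x a -> dpl g x b ->
  dpl (fun t => f t / g t) x ((a * g x - f x * b) / (g x)^2).
Proof. intros Hg Hf Hg'. eapply dpl_eq. exact (derivable_pt_lim_div f g x a b Hf Hg' Hg).
  unfold Rsqr; simpl; field; auto. Qed.

Lemma dscal c f x a : dpl f x a -> dpl (fun t => c * f t) x (c * a).
Proof. intros H. eapply dpl_eq. exact (dmul (fun _ => c) f x 0 a (dcst c x) H). rewrite Rmult_0_l, Rplus_0_l; reflexivity. Qed.

Lemma dzero f x l : (forall t, f t = 0) -> dpl f x l -> l = 0.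
Proof. intros E H. apply (uniqueness_limite f x); auto.
  apply (dpl_ext (fun _ => 0)); [intros; rewrite E; auto| apply dcst]. Qed.

Lemma peval_cons a p t : peval (a :: p) t = a + t * peval p t.
Proof. reflexivity. Qed.
Lemma peval_nil t : peval nil t = 0.
Proof. reflexivity. Qed.

Lemma peval_padd p q t : peval (padd p q) t = peval p t + peval q t.
Proof. revert q; induction p as [|a p IH]; intros [|b q]; simpl; try ring.
  rewrite IH. ring. Qed.

Lemma peval_pscale c p t : peval (pscale c p) t = c * peval p t.
Proof. induction p as [|a p IH]; unfold pscale in *; simpl in *; [ring|]. rewrite IH. ring. Qed.

Lemma peval_pmulX p t : peval (pmulX p) t = t * peval p t.
Proof. unfold pmulX. simpl. ring. Qed.

Lemma peval_pderiv_aux k p t :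
  peval (pderiv_aux k p) t = INR k * peval p t + t * peval (pderiv p) t.
Proof. revert k; induction p as [|a p IH]; intros k; simpl; [ring|].
  rewrite (IH (S k)). rewrite (IH 1%nat). rewrite S_INR. simpl. ring. Qed.

Lemma peval_deriv p t : dpl (peval p) t (peval (pderiv p) t).
Proof. induction p as [|a p IH].
  - simpl. apply (dpl_ext (fun _ => 0)); [intros; reflexivity| apply dcst].
  - apply (dpl_ext (fun t => a + t * peval p t)); [intros; reflexivity|].
    eapply dpl_eq. apply dplus. apply dcst. apply dmul. apply did. apply IH.
    simpl. rewrite peval_pderiv_aux. simpl. ring. Qed.

Lemma length_pderiv_aux k p : length (pderiv_aux k p) = length p.
Proof. revert k; induction p; intros; simpl; auto. Qed.

Lemma length_pderiv p : length (pderiv p) = pred (length p).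
Proof. destruct p; simpl; auto. apply length_pderiv_aux. Qed.

Lemma length_iter j p : length (Nat.iter j pderiv p) = (length p - j)%nat.
Proof. induction j; simpl; [lia|]. rewrite length_pderiv, IHj. lia. Qed.

Lemma length_padd p q : length (padd p q) = Nat.max (length p) (length q).
Proof. revert q; induction p; intros [|b q]; simpl; auto. Qed.

Lemma length_pscale c p : length (pscale c p) = length p.
Proof. apply length_map. Qed.

Lemma leg_pair_len n : (length (fst (leg_pair n)) <= n + 1 /\ length (snd (leg_pair n)) <= n + 2)%nat.
Proof. induction n; [simpl; lia|].
  cbn [leg_pair]. destruct (leg_pair n) as [p q]. cbn [fst snd] in *. split; [lia|].
  rewrite length_pscale, length_padd, !length_pscale. unfold pmulX. cbn [length]. lia. Qed.

Definition Aj (N j : nat) (t : R) : R := peval (Nat.iter j pderiv (legendre N)) t.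

Lemma Aj_deriv N j t : dpl (Aj N j) t (Aj N (S j) t).
Proof. unfold Aj. simpl. apply peval_deriv. Qed.

Lemma Aj_high N t : Aj N (S N) t = 0.
Proof. unfold Aj. assert (H: length (Nat.iter (S N) pderiv (legendre N)) = 0%nat).
  { rewrite length_iter. unfold legendre. pose proof (leg_pair_len N). lia. }
  destruct (Nat.iter (S N) pderiv (legendre N)); [reflexivity| discriminate]. Qed.

Lemma deq f g x a b : (forall t, f t = g t) -> dpl f x a -> dpl g x b -> a = b.
Proof. intros E Hf Hg. apply (uniqueness_limite g x); auto. eapply dpl_ext; eauto. Qed.

Lemma leg_fst_S k : legendre (S k) = snd (leg_pair k).
Proof. unfold legendre. cbn [leg_pair]. destruct (leg_pair k); reflexivity. Qed.

Lemma leg_SS_poly k : legendre (S (S k)) =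
  pscale (/ INR (k + 2)) (padd (pscale (INR (2 * k + 3)) (pmulX (legendre (S k))))
    (pscale (- INR (k + 1)) (legendre k))).
Proof. rewrite leg_fst_S, (leg_fst_S k). unfold legendre. cbn [leg_pair].
  destruct (leg_pair k); reflexivity. Qed.

Lemma leg_SS k t : peval (legendre (S (S k))) t =
  / INR (k + 2) * (INR (2 * k + 3) * (t * peval (legendre (S k)) t) - INR (k + 1) * peval (legendre k) t).
Proof. rewrite leg_SS_poly, peval_pscale, peval_padd, !peval_pscale, peval_pmulX. ring. Qed.

Lemma INR_pos_S k : 0 < INR (k + 2).
Proof. apply lt_0_INR. lia. Qed.

Lemma leg_rec k t : INR (k + 2) * Aj (S (S k)) 0 t =
  INR (2 * k + 3) * t * Aj (S k) 0 t - INR (k + 1) * Aj k 0 t.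
Proof. unfold Aj; simpl Nat.iter. rewrite leg_SS. pose proof (INR_pos_S k). field. lra. Qed.

Lemma leg_drec k t : INR (k + 2) * Aj (S (S k)) 1 t =
  INR (2 * k + 3) * (Aj (S k) 0 t + t * Aj (S k) 1 t) - INR (k + 1) * Aj k 1 t.
Proof.
  apply (deq (fun t => INR (k + 2) * Aj (S (S k)) 0 t)
             (fun t => INR (2 * k + 3) * t * Aj (S k) 0 t - INR (k + 1) * Aj k 0 t) t).
  - intros; apply leg_rec.
  - apply dscal, Aj_deriv.
  - eapply dpl_eq. apply dminus. apply dmul. apply dscal, did. apply Aj_deriv.
    apply dscal, Aj_deriv. cbv beta; ring.
Qed.

Lemma leg_one N : Aj N 0 1 = 1 /\ Aj N 0 (-1) = (-1) ^ N.
Proof.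
  assert (forall k, (Aj k 0 1 = 1 /\ Aj k 0 (-1) = (-1) ^ k) /\ (Aj (S k) 0 1 = 1 /\ Aj (S k) 0 (-1) = (-1) ^ (S k))).
  { induction k.
    - unfold Aj, legendre; simpl. split; split; ring.
    - destruct IHk as [[H1 H2] [H3 H4]]. split; [split; auto|].
      pose proof (leg_rec k 1) as R1. pose proof (leg_rec k (-1)) as R2.
      rewrite H1, H3 in R1. rewrite H2, H4 in R2.
      pose proof (INR_pos_S k). rewrite !plus_INR, mult_INR in *.
      replace ((-1) ^ S (S k)) with ((-1)^k) by (simpl; ring).
      replace ((-1) ^ S k) with (-(-1)^k) in R2 by (simpl; ring).
      replace (INR 2) with 2 in * by (simpl; ring). replace (INR 3) with 3 in * by (simpl; ring).
      replace (INR 1) with 1 in * by (simpl; ring).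
      split; [nra|]. nra. }
  apply H.
Qed.

Lemma leg_ab n t :
  Aj (S n) 1 t - t * Aj n 1 t = INR (S n) * Aj n 0 t /\
  t * Aj (S n) 1 t - Aj n 1 t = INR (S n) * Aj (S n) 0 t.
Proof.
  induction n.
  - unfold Aj, legendre; simpl. split; ring.
  - destruct IHn as [Ha Hb]. pose proof (leg_drec n t) as D. pose proof (leg_rec n t) as R.
    pose proof (INR_pos_S n).
    assert (E : INR (S (S n)) = INR (n + 2)) by (f_equal; lia). rewrite E.
    rewrite !S_INR in *. rewrite !plus_INR, mult_INR in *.
    replace (INR 2) with 2 in * by (simpl; ring). replace (INR 3) with 3 in * by (simpl; ring).
    replace (INR 1) with 1 in * by (simpl; ring).
    set (k := INR n) in *. set (P0 := Aj n 0 t) in *. set (P1 := Aj (S n) 0 t) in *.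
    set (P2 := Aj (S (S n)) 0 t) in *. set (D0 := Aj n 1 t) in *. set (D1 := Aj (S n) 1 t) in *.
    set (D2 := Aj (S (S n)) 1 t) in *.
    assert (Hk : k + 2 <> 0) by lra.
    split.
    + apply (Rmult_eq_reg_l (k + 2)); [|lra].
      replace ((k+2) * (D2 - t * D1)) with ((k+2) * D2 - (k+2) * t * D1) by ring. rewrite D.
      replace D0 with (t * D1 - (k + 1) * P1) by lra. ring.
    + apply (Rmult_eq_reg_l (k + 2)); [|lra].
      replace ((k+2) * (t * D2 - D1)) with (t * ((k+2) * D2) - (k+2) * D1) by ring.
      replace ((k + 2) * ((k + 1 + 1) * P2)) with ((k+2) * ((k+2) * P2)) by ring.
      rewrite D, R.
      replace D0 with (t * D1 - (k + 1) * P1) in Ha |- * by lra.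
      assert (E2 : (t * t - 1) * D1 = (k + 1) * (t * P1 - P0)) by nra.
      nra.
Qed.

Lemma leg_ode0 N t : (1 - t ^ 2) * Aj N 2 t - 2 * t * Aj N 1 t + INR N * (INR N + 1) * Aj N 0 t = 0.
Proof.
  destruct N as [|n].
  - unfold Aj, legendre; simpl. ring.
  - assert (Da : Aj (S n) 2 t - (Aj n 1 t + t * Aj n 2 t) = INR (S n) * Aj n 1 t).
    { apply (deq (fun t => Aj (S n) 1 t - t * Aj n 1 t) (fun t => INR (S n) * Aj n 0 t) t).
      - intros; apply leg_ab.
      - eapply dpl_eq. apply dminus. apply Aj_deriv. apply dmul. apply did. apply Aj_deriv. cbv beta; ring.
      - apply dscal, Aj_deriv. }
    assert (Db : Aj (S n) 1 t + t * Aj (S n) 2 t - Aj n 2 t = INR (S n) * Aj (S n) 1 t).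
    { apply (deq (fun t => t * Aj (S n) 1 t - Aj n 1 t) (fun t => INR (S n) * Aj (S n) 0 t) t).
      - intros; apply leg_ab.
      - eapply dpl_eq. apply dminus. apply dmul. apply did. apply Aj_deriv. apply Aj_deriv. cbv beta; ring.
      - apply dscal, Aj_deriv. }
    destruct (leg_ab n t) as [Ha Hb].
    rewrite S_INR in *.
    set (k := INR n) in *. set (P0 := Aj n 0 t) in *. set (P1 := Aj (S n) 0 t) in *.
    set (D0 := Aj n 1 t) in *. set (D1 := Aj (S n) 1 t) in *.
    set (E0 := Aj n 2 t) in *. set (E1 := Aj (S n) 2 t) in *.
    replace E0 with (D1 + t * E1 - (k + 1) * D1) in Da by lra.
    replace D0 with (t * D1 - (k + 1) * P1) in Da by lra.
    nra.
Qed.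

Lemma leg_ode N j t : (1 - t ^ 2) * Aj N (S (S j)) t - 2 * (INR j + 1) * t * Aj N (S j) t
   + (INR N - INR j) * (INR N + INR j + 1) * Aj N j t = 0.
Proof.
  revert t; induction j; intros t.
  - pose proof (leg_ode0 N t). simpl INR. lra.
  - assert (H2 : dpl (fun t => (1 - t ^ 2) * Aj N (S (S j)) t - 2 * (INR j + 1) * t * Aj N (S j) t
      + (INR N - INR j) * (INR N + INR j + 1) * Aj N j t) t
      ((1 - t^2) * Aj N (S (S (S j))) t + (- 2 * t) * Aj N (S (S j)) t
        - 2 * (INR j + 1) * (Aj N (S j) t + t * Aj N (S (S j)) t)
        + (INR N - INR j) * (INR N + INR j + 1) * Aj N (S j) t)).
    { eapply dpl_eq. apply dplus. apply dminus. apply dmul.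
      apply dminus. apply dcst. apply dpow. apply did. apply Aj_deriv.
      apply dmul. apply dscal. apply did. apply Aj_deriv. apply dscal. apply Aj_deriv.
      cbv beta; simpl. ring. }
    pose proof (dzero _ t _ IHj H2) as H. rewrite S_INR. nra.
Qed.

Definition vw (N j : nat) : R := INR (fact (N - j)) / INR (fact (N + j)).
Definition epsw (j : nat) : R := match j with O => 1 | _ => 2 end.
Definition Tt (N j : nat) (t : R) : R := epsw j * vw N j * (1 - t ^ 2) ^ j * (Aj N j t) ^ 2.
Definition Cc (N j : nat) (t : R) : R := vw N j * (1 - t ^ 2) ^ j * Aj N j t * Aj N (S j) t.

Lemma fact_pos_R k : 0 < INR (fact k).
Proof. apply lt_0_INR, lt_O_fact. Qed.

Lemma vw_pos N j : 0 < vw N j.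
Proof. unfold vw. apply Rdiv_lt_0_compat; apply fact_pos_R. Qed.

Lemma vw_rec N j : (S j <= N)%nat -> vw N j = (INR N - INR j) * (INR N + INR j + 1) * vw N (S j).
Proof.
  intros H. unfold vw.
  replace (N - j)%nat with (S (N - S j)) by lia.
  replace (N + S j)%nat with (S (N + j)) by lia.
  rewrite !fact_simpl, !mult_INR.
  replace (INR (S (N - S j))) with (INR N - INR j) by (rewrite S_INR, minus_INR by lia; rewrite S_INR; ring).
  rewrite S_INR, plus_INR.
  pose proof (fact_pos_R (N - S j)). pose proof (fact_pos_R (N + j)).
  assert (0 < INR N + INR j + 1) by (pose proof (pos_INR N); pose proof (pos_INR j); lra).
  field. lra.
Qed.

Lemma vw0 N : vw N 0 = 1.
Proof. unfold vw. rewrite Nat.sub_0_r, Nat.add_0_r. pose proof (fact_pos_R N). field. lra. Qed.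

Lemma Tt_deriv0 N t : dpl (Tt N 0) t (2 * Cc N 0 t).
Proof.
  unfold Tt, Cc. apply (dpl_ext (fun t => (epsw 0 * vw N 0) * (Aj N 0 t ^ 2))).
  intros; simpl; ring. eapply dpl_eq.
  apply dscal. apply dpow. apply Aj_deriv. simpl. ring.
Qed.

Lemma Tt_derivS N k t : (S k <= N)%nat -> dpl (Tt N (S k)) t (2 * (Cc N (S k) t - Cc N k t)).
Proof.
  intros Hk. unfold Tt, Cc.
  apply (dpl_ext (fun t => (epsw (S k) * vw N (S k)) * ((1 - t ^ 2) ^ S k * Aj N (S k) t ^ 2))).
  intros; ring.
  eapply dpl_eq. apply dscal. apply dmul. apply dpow. apply dminus. apply dcst. apply dpow. apply did.
  apply dpow. apply Aj_deriv.
  rewrite (vw_rec N k Hk). pose proof (leg_ode N k t) as HO.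
  cbv beta. simpl epsw. simpl pred. rewrite S_INR. simpl pow.
  set (v := vw N (S k)) in *. set (p := (1 - t * (t * 1)) ^ k) in *.
  replace ((1 - t ^ 2)) with (1 - t * (t * 1)) in HO by (simpl; ring).
  set (a0 := Aj N k t) in *. set (a1 := Aj N (S k) t) in *. set (a2 := Aj N (S (S k)) t) in *.
  clearbody v p a0 a1 a2. apply Rminus_diag_uniq.
  match goal with |- ?L - ?R = 0 => transitivity (2 * v * p * a1 * ((1 - t * (t * 1)) * a2 - 2 * (INR k + 1) * t * a1 +
      (INR N - INR k) * (INR N + INR k + 1) * a0)) end.
  simpl INR. ring. rewrite HO. ring.
Qed.

Definition Sm N k t := sum_f_R0 (fun j => Tt N j t) k.

Lemma Sm_deriv N k t : (k <= N)%nat -> dpl (Sm N k) t (2 * Cc N k t).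
Proof.
  induction k; intros Hk.
  - unfold Sm; simpl. apply Tt_deriv0.
  - unfold Sm; simpl. eapply dpl_eq. apply dplus. apply IHk. lia. apply Tt_derivS. lia. ring.
Qed.

Lemma Cc_N N t : Cc N N t = 0.
Proof. unfold Cc. rewrite Aj_high. ring. Qed.

Lemma Sm_at1 N k : Sm N k 1 = 1.
Proof.
  induction k.
  - unfold Sm, Tt; simpl. rewrite vw0. destruct (leg_one N) as [H _]. rewrite H. ring.
  - unfold Sm in *; simpl. rewrite IHk. unfold Tt. simpl. ring.
Qed.

Lemma Sm_const N t : Sm N N t = 1.
Proof.
  rewrite <- (Sm_at1 N N).
  assert (D : forall c, dpl (Sm N N) c ((fun _ => 0) c)).
  { intros c. eapply dpl_eq. apply Sm_deriv. lia. rewrite Cc_N. ring. }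
  destruct (Rtotal_order t 1) as [H|[H|H]].
  - destruct (MVT_cor2 (Sm N N) (fun _ => 0) t 1 H (fun c _ => D c)) as [c [E _]]. lra.
  - subst; auto.
  - destruct (MVT_cor2 (Sm N N) (fun _ => 0) 1 t H (fun c _ => D c)) as [c [E _]]. lra.
Qed.

Lemma Tt_nonneg N j t : -1 <= t <= 1 -> 0 <= Tt N j t.
Proof.
  intros Ht. unfold Tt. apply Rmult_le_pos; [|apply pow2_ge_0].
  apply Rmult_le_pos; [apply Rmult_le_pos|].
  - destruct j; simpl; lra.
  - left; apply vw_pos.
  - apply pow_le. nra.
Qed.

Lemma Tt_high N t : Tt N (S N) t = 0.
Proof. unfold Tt. rewrite Aj_high. ring. Qed.

Lemma Sm_full N t : Sm N (S N) t = 1.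
Proof. unfold Sm; simpl. fold (Sm N N t). rewrite Sm_const, Tt_high. ring. Qed.

Lemma sum_ge_three (f : nat -> R) a K : (forall j, 0 <= f j) -> (a + 2 <= K)%nat ->
  f a + f (S a) + f (S (S a)) <= sum_f_R0 f K.
Proof.
  intros Hf HK. induction K.
  - lia.
  - destruct (Nat.eq_dec (a + 2) (S K)) as [E|E].
    + replace K with (S a) by lia. simpl.
      assert (0 <= sum_f_R0 f a - f a).
      { destruct a; simpl; [lra|]. pose proof (cond_pos_sum f a Hf). lra. }
      pose proof (Hf (S (S a))). lra.
    + simpl. pose proof (Hf (S K)). pose proof (IHK ltac:(lia)). lra.
Qed.

Lemma addition_three N l t : -1 <= t <= 1 -> (1 <= l <= N)%nat ->
  Tt N (pred l) t + Tt N l t + Tt N (S l) t <= 1.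
Proof.
  intros Ht Hl. rewrite <- (Sm_full N t). unfold Sm.
  replace l with (S (pred l)) at 2 3 by lia.
  apply (sum_ge_three (fun j => Tt N j t)). intros; apply Tt_nonneg; auto. lia.
Qed.

Lemma addition_two N t : -1 <= t <= 1 -> (1 <= N)%nat -> Tt N 0 t + Tt N 1 t <= 1.
Proof.
  intros Ht HN. pose proof (addition_three N 1 t Ht ltac:(lia)). simpl pred in H.
  pose proof (Tt_nonneg N 2 t Ht). lra.
Qed.

Ltac pos := repeat first [assumption | (left; assumption) | apply pow2_ge_0 | apply Rmult_le_pos | lra].

Lemma M_vw N l : INR (fact (N + l)) / INR (fact (N - l)) = / vw N l.
Proof. unfold vw. pose proof (fact_pos_R (N+l)). pose proof (fact_pos_R (N-l)). field. lra. Qed.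

Lemma leg_bound N l c : (1 <= N)%nat -> (l <= N)%nat -> -1 < c < 1 ->
  let Sq := sqrt (1 - c ^ 2) in
  let P := Sq ^ l * Aj N l c in
  let P' := Sq ^ l * (Aj N (Datatypes.S l) c - INR l * c * Aj N l c / Sq ^ 2) in
  let M := INR (fact (N + l)) / INR (fact (N - l)) in
  INR N ^ 2 * P ^ 2 + Sq ^ 2 * P' ^ 2 <= INR N ^ 2 * M /\ INR l ^ 2 * P ^ 2 / Sq ^ 2 <= INR N ^ 2 * M.
Proof.
  intros HN Hl Hc Sq P P' M.
  assert (HS2 : Sq ^ 2 = 1 - c ^ 2) by (unfold Sq; rewrite pow2_sqrt; nra).
  assert (HSp : 0 < Sq) by (unfold Sq; apply sqrt_lt_R0; nra).
  assert (Hct : -1 <= c <= 1) by lra.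
  unfold M; rewrite M_vw.
  assert (HNr : 1 <= INR N) by (apply (le_INR 1); auto).
  destruct l as [|k].
  -
    pose proof (addition_two N c Hct HN) as H2.
    unfold Tt in H2. simpl epsw in H2. rewrite vw0 in H2.
    pose proof (vw_rec N 0 HN) as HR. rewrite vw0 in HR.
    pose proof (vw_pos N 1) as Hv1.
    rewrite vw0, Rinv_1.
    assert (EP : P = Aj N 0 c) by (unfold P; simpl; ring).
    assert (EP' : P' = Aj N 1 c) by (unfold P'; simpl; field; lra).
    rewrite EP, EP'.
    set (A0 := Aj N 0 c) in *. set (A1 := Aj N 1 c) in *. set (v1 := vw N 1) in *.
    rewrite <- HS2 in H2. simpl INR in *.
    assert (Q : Sq ^ 2 * A1 ^ 2 = (INR N * (INR N + 1) / 2) * (2 * v1 * (Sq ^ 2) ^ 1 * A1 ^ 2)).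
    { replace (INR N * (INR N + 1) / 2 * (2 * v1 * (Sq ^ 2) ^ 1 * A1 ^ 2)) with (((INR N - 0) * (INR N + 0 + 1) * v1) * (Sq^2 * A1^2)) by (clear P P' M EP EP'; simpl; field).
      rewrite <- HR. ring. }
    assert (0 <= 2 * v1 * (Sq ^ 2) ^ 1 * A1 ^ 2) by (simpl; pose proof (pow2_ge_0 Sq); pose proof (pow2_ge_0 A1); nra).
    assert (0 <= A0 ^ 2) by apply pow2_ge_0.
    split.
    + rewrite Q. simpl pow in H2 |- *.
      assert (INR N * (INR N + 1) / 2 <= INR N * (INR N * 1)) by nra. nra.
    + simpl. nra.
  -
    pose proof (addition_three N (S k) c Hct ltac:(lia)) as H3. simpl pred in H3.
    pose proof (leg_ode N k c) as HO.
    pose proof (vw_rec N k Hl) as Hvk.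
    pose proof (vw_pos N (S k)) as Hv1. pose proof (vw_pos N k) as Hv0.
    assert (Hk1 : INR (S k) <= INR N) by (apply le_INR; auto).
    rewrite S_INR in Hk1.
    assert (Hk0 : 0 <= INR k) by apply pos_INR.
    unfold Tt in H3.
    set (q := Sq ^ k) in *.
    assert (Eq : (1 - c ^ 2) ^ k = q ^ 2) by (rewrite <- HS2; unfold q; rewrite <- !pow_mult; f_equal; lia).
    assert (Eq1 : (1 - c ^ 2) ^ S k = Sq ^ 2 * q ^ 2) by (change ((1 - c ^ 2) ^ S k) with ((1 - c ^ 2) * (1 - c ^ 2) ^ k); rewrite Eq, HS2; ring).
    assert (Eq2 : (1 - c ^ 2) ^ S (S k) = Sq ^ 2 * Sq ^ 2 * q ^ 2) by (change ((1 - c ^ 2) ^ S (S k)) with ((1 - c ^ 2) * ((1 - c ^ 2) * (1 - c ^ 2) ^ k)); rewrite Eq, HS2; ring).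
    rewrite Eq, Eq1, Eq2 in H3. rewrite <- HS2 in HO.
    set (A0 := Aj N k c) in *. set (A1 := Aj N (S k) c) in *. set (A2 := Aj N (S (S k)) c) in *.
    set (v0 := vw N k) in *. set (v1 := vw N (S k)) in *. set (v2 := vw N (S (S k))) in *.
    set (n := INR N) in *. set (kk := INR k) in *.
    set (a := (n - kk) * (n + kk + 1)) in *.
    assert (Ha0 : 0 <= a) by (unfold a; nra).
    assert (Ha1 : a <= n * (n + 1)) by (unfold a; nra).
    set (T0 := epsw k * v0 * q ^ 2 * A0 ^ 2) in *.
    set (T1 := epsw (S k) * v1 * (Sq ^ 2 * q ^ 2) * A1 ^ 2) in *.
    set (T2 := epsw (S (S k)) * v2 * (Sq ^ 2 * Sq ^ 2 * q ^ 2) * A2 ^ 2) in *.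
    assert (HT0 : 0 <= T0) by (pose proof (Tt_nonneg N k c Hct) as X; unfold Tt in X; rewrite Eq in X; exact X).
    assert (HT1 : 0 <= T1) by (pose proof (Tt_nonneg N (S k) c Hct) as X; unfold Tt in X; rewrite Eq1 in X; exact X).
    assert (HT2 : 0 <= T2) by (pose proof (Tt_nonneg N (S (S k)) c Hct) as X; unfold Tt in X; rewrite Eq2 in X; exact X).
    assert (Hq2 : 0 <= q ^ 2) by apply pow2_ge_0.
    assert (HW0 : a * (a * v1 * q ^ 2 * A0 ^ 2) <= n * (n + 1) * T0).
    { assert (v1 * a = v0) by (rewrite Hvk; unfold a; ring).
      assert (a * v1 * q ^ 2 * A0 ^ 2 <= T0).
      { unfold T0. replace (a * v1) with v0 by lra.
        assert (1 <= epsw k) by (destruct k; simpl; lra).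
        assert (0 <= v0 * q ^ 2 * A0 ^ 2) by (pose proof (pow2_ge_0 A0); apply Rmult_le_pos; [apply Rmult_le_pos|]; lra).
        nra. }
      assert (0 <= a * v1 * q ^ 2 * A0 ^ 2) by (pose proof (pow2_ge_0 A0); apply Rmult_le_pos; [apply Rmult_le_pos|]; [apply Rmult_le_pos| |]; lra).
      nra. }
    assert (HW2 : v1 * q ^ 2 * (Sq ^ 2 * Sq ^ 2) * A2 ^ 2 <= n * (n + 1) * T2 / 2).
    { destruct (le_lt_dec (S (S k)) N) as [Hb|Hb].
      - pose proof (vw_rec N (S k) Hb) as Hv12. fold v1 v2 in Hv12. rewrite S_INR in Hv12. fold n kk in Hv12.
        assert (0 <= (n - (kk + 1)) * (n + (kk + 1) + 1)).
        { assert (INR (S (S k)) <= INR N) by (apply le_INR; auto). rewrite !S_INR in H. fold n kk in H. nra. }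
        assert ((n - (kk + 1)) * (n + (kk + 1) + 1) <= n * (n + 1)) by nra.
        rewrite Hv12. unfold T2. simpl epsw.
        assert (0 <= v2 * q ^ 2 * (Sq ^ 2 * Sq ^ 2) * A2 ^ 2).
        { pose proof (vw_pos N (S (S k))). pose proof (pow2_ge_0 A2). pose proof (pow2_ge_0 Sq).
          pos. }
        replace (2 * v2 * (Sq ^ 2 * Sq ^ 2 * q ^ 2) * A2 ^ 2) with (2 * (v2 * q ^ 2 * (Sq ^ 2 * Sq ^ 2) * A2 ^ 2)) by ring.
        set (W := v2 * q ^ 2 * (Sq ^ 2 * Sq ^ 2) * A2 ^ 2) in *.
        replace ((n - (kk + 1)) * (n + (kk + 1) + 1) * v2 * q ^ 2 * (Sq ^ 2 * Sq ^ 2) * A2 ^ 2)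
          with ((n - (kk + 1)) * (n + (kk + 1) + 1) * W) by (unfold W; ring).
        nra.
      - assert (A2 = 0) by (unfold A2; replace (S (S k)) with (S N) by lia; apply Aj_high).
        rewrite H. assert (0 <= n * (n+1) * T2 / 2) by (assert (0 <= n * (n+1)) by nra; nra). nra. }
    assert (HT1e : T1 = 2 * v1 * (Sq ^ 2 * q ^ 2) * A1 ^ 2) by (unfold T1; simpl epsw; ring).
    set (Z := n ^ 2 * q ^ 2 * Sq ^ 2 * A1 ^ 2 + / 2 * q ^ 2 * (Sq ^ 2 * Sq ^ 2 * A2 ^ 2 + a ^ 2 * A0 ^ 2)).
    assert (HZ : v1 * Z <= n ^ 2).
    { assert (v1 * Z = n ^ 2 * T1 / 2 + / 2 * (v1 * q ^ 2 * (Sq ^ 2 * Sq ^ 2) * A2 ^ 2) + / 2 * (a * (a * v1 * q ^ 2 * A0 ^ 2)))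
        by (rewrite HT1e; unfold Z; field).
      rewrite H. assert (n * (n + 1) <= 2 * n ^ 2) by nra. nra. }
    assert (Hn2 : kk + 1 <= n) by auto.
    assert (HODE : (kk + 1) * c * A1 = (Sq ^ 2 * A2 + a * A0) / 2).
    { lra. }
    assert (HSq0 : Sq <> 0) by lra.
    replace (/ v1) with (/ v1) by auto.
    assert (Hgoal : forall U, U <= Z -> n ^ 2 * 1 <= n ^ 2 * 1 -> U <= n ^ 2 * / v1).
    { intros U HU _. apply (Rmult_le_reg_l v1); [auto|].
      replace (v1 * (n ^ 2 * / v1)) with (n ^ 2) by (field; lra). nra. }
    split; apply Hgoal; try lra; unfold P, P'; fold n; rewrite S_INR; fold kk;
      replace (Sq ^ S k) with (Sq * q) by (simpl; auto).
    + assert (E : n ^ 2 * (Sq * q * A1) ^ 2 + Sq ^ 2 * (Sq * q * (A2 - (kk + 1) * c * A1 / Sq ^ 2)) ^ 2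
               = n ^ 2 * q ^ 2 * Sq ^ 2 * A1 ^ 2 + q ^ 2 * (Sq ^ 2 * A2 - (kk + 1) * c * A1) ^ 2) by (field; auto).
      rewrite E. rewrite HODE. unfold Z.
      assert (0 <= q ^ 2 * (Sq ^ 2 * A2 + a * A0) ^ 2) by (apply Rmult_le_pos; [auto| apply pow2_ge_0]).
      replace (q ^ 2 * (Sq ^ 2 * A2 - (Sq ^ 2 * A2 + a * A0) / 2) ^ 2) with
        (/ 2 * q ^ 2 * (Sq ^ 2 * Sq ^ 2 * A2 ^ 2 + a ^ 2 * A0 ^ 2) - / 4 * (q ^ 2 * (Sq ^ 2 * A2 + a * A0) ^ 2)) by field.
      lra.
    + assert (E : (kk + 1) ^ 2 * (Sq * q * A1) ^ 2 / Sq ^ 2 = q ^ 2 * ((kk + 1) * c * A1) ^ 2 + (kk + 1) ^ 2 * q ^ 2 * Sq ^ 2 * A1 ^ 2).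
      { replace (q ^ 2 * ((kk + 1) * c * A1) ^ 2) with ((kk + 1) ^ 2 * q ^ 2 * A1 ^ 2 * c ^ 2) by ring.
        replace (c ^ 2) with (1 - Sq ^ 2) by lra. field; auto. }
      rewrite E, HODE. unfold Z.
      assert (0 <= q ^ 2 * (Sq ^ 2 * A2 - a * A0) ^ 2) by (apply Rmult_le_pos; [auto| apply pow2_ge_0]).
      replace (q ^ 2 * ((Sq ^ 2 * A2 + a * A0) / 2) ^ 2) with
        (/ 2 * q ^ 2 * (Sq ^ 2 * Sq ^ 2 * A2 ^ 2 + a ^ 2 * A0 ^ 2) - / 4 * (q ^ 2 * (Sq ^ 2 * A2 - a * A0) ^ 2)) by field.
      assert (0 <= q ^ 2 * Sq ^ 2 * A1 ^ 2) by (apply Rmult_le_pos; [apply Rmult_le_pos; [auto|apply pow2_ge_0]|apply pow2_ge_0]).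
      assert ((kk + 1) ^ 2 <= n ^ 2) by nra.
      assert ((kk + 1) ^ 2 * q ^ 2 * Sq ^ 2 * A1 ^ 2 <= n ^ 2 * q ^ 2 * Sq ^ 2 * A1 ^ 2).
      { replace ((kk + 1) ^ 2 * q ^ 2 * Sq ^ 2 * A1 ^ 2) with ((kk + 1) ^ 2 * (q ^ 2 * Sq ^ 2 * A1 ^ 2)) by ring.
        replace (n ^ 2 * q ^ 2 * Sq ^ 2 * A1 ^ 2) with (n ^ 2 * (q ^ 2 * Sq ^ 2 * A1 ^ 2)) by ring.
        apply Rmult_le_compat_r; auto. }
      lra.
Qed.

Lemma cp_fst a0 a1 t k : fst (cheb_pair a0 a1 t (S k)) = snd (cheb_pair a0 a1 t k).
Proof. simpl. destruct (cheb_pair a0 a1 t k); reflexivity. Qed.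
Lemma cp_snd a0 a1 t k : snd (cheb_pair a0 a1 t (S k)) = 2 * t * snd (cheb_pair a0 a1 t k) - fst (cheb_pair a0 a1 t k).
Proof. simpl. destruct (cheb_pair a0 a1 t k); reflexivity. Qed.
Lemma cp_SS a0 a1 t k : fst (cheb_pair a0 a1 t (S (S k))) = 2 * t * fst (cheb_pair a0 a1 t (S k)) - fst (cheb_pair a0 a1 t k).
Proof. rewrite !cp_fst, cp_snd. reflexivity. Qed.

Lemma cT0 u : chebT 0 u = 1. Proof. reflexivity. Qed.
Lemma cT1 u : chebT 1 u = u. Proof. reflexivity. Qed.
Lemma cTSS k u : chebT (S (S k)) u = 2 * u * chebT (S k) u - chebT k u.
Proof. apply cp_SS. Qed.
Lemma cU0 u : chebU 0 u = 1. Proof. reflexivity. Qed.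
Lemma cU1 u : chebU 1 u = 2 * u. Proof. reflexivity. Qed.
Lemma cUSS k u : chebU (S (S k)) u = 2 * u * chebU (S k) u - chebU k u.
Proof. apply cp_SS. Qed.

Lemma rec_zero (a : nat -> R) u : a 0%nat = 0 -> a 1%nat = 0 ->
  (forall k, a (S (S k)) = 2 * u * a (S k) - a k) -> forall k, a k = 0.
Proof.
  intros H0 H1 HS. assert (forall k, a k = 0 /\ a (S k) = 0).
  { induction k; auto. destruct IHk. split; auto. rewrite HS. rewrite H, H2. ring. }
  apply H.
Qed.

Lemma C1 k u : chebT (S k) u = chebU (S k) u - u * chebU k u.
Proof.
  pose proof (rec_zero (fun k => chebT (S k) u - chebU (S k) u + u * chebU k u) u) as R.
  simpl in R. apply Rminus_diag_uniq. rewrite <- (R ltac:(rewrite cT1, cU1, cU0; ring)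
     ltac:(rewrite cTSS, cUSS, cT1, cU1, cU0, cT0; ring) ltac:(intros; rewrite !cTSS, !cUSS; ring) k). ring.
Qed.

Lemma C2 k u : chebT k u - u * chebT (S k) u = (1 - u ^ 2) * chebU k u.
Proof.
  pose proof (rec_zero (fun k => chebT k u - u * chebT (S k) u - (1 - u ^ 2) * chebU k u) u) as R.
  simpl in R. apply Rminus_diag_uniq. rewrite <- (R ltac:(rewrite cT1, cU0, cT0; ring)
     ltac:(rewrite cTSS, cU1, cT1, cT0; ring) ltac:(intros; rewrite !cTSS, !cUSS; ring) k). simpl. ring.
Qed.

Lemma pell k u : chebT (S k) u ^ 2 + (1 - u ^ 2) * chebU k u ^ 2 = 1.
Proof.
  assert (forall k, chebU (S k) u ^ 2 - 2 * u * chebU (S k) u * chebU k u + chebU k u ^ 2 = 1).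
  { induction k0. rewrite cU1, cU0. ring.
    rewrite cUSS. rewrite <- IHk0. ring. }
  rewrite C1. transitivity (chebU (S k) u ^ 2 - 2 * u * chebU (S k) u * chebU k u + chebU k u ^ 2); [ring| apply H].
Qed.

Lemma chebT_deriv k u : dpl (chebT k) u (INR k * chebU (pred k) u).
Proof.
  assert (forall k, dpl (chebT k) u (INR k * chebU (pred k) u) /\ dpl (chebT (S k)) u (INR (S k) * chebU k u)).
  { induction k0.
    - split.
      + eapply dpl_eq. apply (dpl_ext (fun _ => 1)). intros; reflexivity. apply dcst. simpl; ring.
      + eapply dpl_eq. apply (dpl_ext (fun t => t)). intros; reflexivity. apply did. simpl; rewrite cU0; ring.
    - destruct IHk0 as [H1 H2]. split; auto.
      eapply dpl_eq. apply (dpl_ext (fun t => 2 * t * chebT (S k0) t - chebT k0 t)).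
      intros; rewrite cTSS; auto.
      apply dminus. apply dmul. apply dscal. apply did. exact H2. exact H1.
      cbv beta. destruct k0.
      + simpl. rewrite cT1, cU1, cU0. ring.
      + simpl pred. rewrite (C1 (S k0) u), (cUSS k0 u). rewrite !S_INR. ring. }
  apply H.
Qed.

Lemma chebU_deriv k u : exists d, dpl (chebU k) u d /\
  (1 - u ^ 2) * d = u * chebU k u - INR (S k) * chebT (S k) u.
Proof.
  assert (forall k, (exists d, dpl (chebU k) u d /\ (1 - u ^ 2) * d = u * chebU k u - INR (S k) * chebT (S k) u) /\
                    (exists d, dpl (chebU (S k)) u d /\ (1 - u ^ 2) * d = u * chebU (S k) u - INR (S (S k)) * chebT (S (S k)) u)).
  { induction k0.
    - split.
      + exists 0. split. apply (dpl_ext (fun _ => 1)). intros; reflexivity. apply dcst.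
        rewrite cU0, cT1. simpl. ring.
      + exists 2. split. eapply dpl_eq. apply (dpl_ext (fun t => 2 * t)). intros; reflexivity. apply dscal, did. ring.
        rewrite cU1, cTSS, cT1, cT0. simpl. ring.
    - destruct IHk0 as [H1 [d2 [H2 E2]]]. split; [exists d2; auto|].
      destruct H1 as [d1 [H1 E1]].
      exists (2 * chebU (S k0) u + 2 * u * d2 - d1). split.
      + eapply dpl_eq. apply (dpl_ext (fun t => 2 * t * chebU (S k0) t - chebU k0 t)).
        intros; rewrite cUSS; auto.
        apply dminus. apply dmul. apply dscal. apply did. exact H2. exact H1.
        cbv beta. ring.
      + pose proof (C2 (S (S k0)) u) as C. rewrite (cTSS (S k0)) in C |- *.
        rewrite cUSS. rewrite !S_INR in *.
        replace ((1 - u ^ 2) * (2 * chebU (S k0) u + 2 * u * d2 - d1)) with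
          (2 * (1 - u ^ 2) * chebU (S k0) u + 2 * u * ((1 - u ^ 2) * d2) - (1 - u ^ 2) * d1) by ring.
        rewrite E1, E2. rewrite (cTSS k0) in *. rewrite (cUSS k0) in C.
        pose proof (C2 (S k0) u) as C'. rewrite cTSS in C'.
        nra. }
  apply H.
Qed.

Lemma assoc_deriv N l c : -1 < c < 1 ->
  dpl (assocLegendre N l) c
    (sqrt (1 - c ^ 2) ^ l * (Aj N (S l) c - INR l * c * Aj N l c / sqrt (1 - c ^ 2) ^ 2)).
Proof.
  intros Hc.
  assert (Hp : 0 < 1 - c ^ 2) by nra.
  assert (HS : 0 < sqrt (1 - c ^ 2)) by (apply sqrt_lt_R0; auto).
  assert (HS2 : sqrt (1 - c ^ 2) ^ 2 = 1 - c ^ 2) by (rewrite pow2_sqrt; lra).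
  unfold assocLegendre. fold (Aj N l).
  eapply dpl_eq. apply dmul. apply dpow. apply dsqrt; auto.
  apply dminus. apply dcst. apply dpow. apply did. apply Aj_deriv.
  cbv beta. destruct l as [|k].
  - simpl pred. rewrite !pow_O. simpl INR. field. lra.
  - simpl pred. set (s := sqrt (1 - c ^ 2)) in *. rewrite S_INR.
    change (s ^ S k) with (s * s ^ k). rewrite HS2. change (peval (Nat.iter (S k) pderiv (legendre N)) c) with (Aj N (S k) c). rewrite <- HS2. replace (INR 2) with 2 by (simpl; ring). field. lra.
Qed.

Lemma rad_sq x0 x1 x2 : rad x0 x1 x2 ^ 2 = x0 ^ 2 + x1 ^ 2 + x2 ^ 2.
Proof. unfold rad. rewrite pow2_sqrt; [auto| nra]. Qed.
Lemma rho_sq x1 x2 : rho x1 x2 ^ 2 = x1 ^ 2 + x2 ^ 2.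
Proof. unfold rho. rewrite pow2_sqrt; [auto| nra]. Qed.
Lemma rho_nonneg x1 x2 : 0 <= rho x1 x2.
Proof. apply sqrt_pos. Qed.
Lemma rad_nonneg x0 x1 x2 : 0 <= rad x0 x1 x2.
Proof. apply sqrt_pos. Qed.

Lemma rad_pos x0 x1 x2 : 0 < rho x1 x2 -> 0 < rad x0 x1 x2.
Proof. intros H. unfold rad. apply sqrt_lt_R0. pose proof (rho_sq x1 x2). nra. Qed.

Lemma c_bound x0 x1 x2 : 0 < rho x1 x2 -> -1 < x0 / rad x0 x1 x2 < 1.
Proof.
  intros H. pose proof (rad_pos x0 x1 x2 H) as Hr. pose proof (rad_sq x0 x1 x2). pose proof (rho_sq x1 x2).
  assert (x0 ^ 2 < rad x0 x1 x2 ^ 2) by nra.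
  set (r := rad x0 x1 x2) in *.
  assert (-r < x0 < r) by (split; nra).
  assert (E : x0 / r * r = x0) by (field; lra).
  split; nra.
Qed.

Lemma radial_path N l X0 X1 X2 t a0 a1 a2 :
  dpl X0 t a0 -> dpl X1 t a1 -> dpl X2 t a2 -> 0 < rho (X1 t) (X2 t) ->
  let x0 := X0 t in let x1 := X1 t in let x2 := X2 t in
  let r := rad x0 x1 x2 in let c := x0 / r in let Sq := sqrt (1 - c ^ 2) in
  let P := Sq ^ l * Aj N l c in
  let P' := Sq ^ l * (Aj N (S l) c - INR l * c * Aj N l c / Sq ^ 2) in
  let rp := (x0 * a0 + x1 * a1 + x2 * a2) / r in
  dpl (fun s => rad (X0 s) (X1 s) (X2 s) ^ N * assocLegendre N l (cos_th1 (X0 s) (X1 s) (X2 s))) t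
    (INR N * r ^ pred N * rp * P + r ^ N * (P' * ((a0 * r - x0 * rp) / r ^ 2))).
Proof.
  intros H0 H1 H2 Hrho x0 x1 x2 r c Sq P P' rp.
  pose proof (rad_pos x0 x1 x2 Hrho) as Hr. fold r in Hr.
  pose proof (c_bound x0 x1 x2 Hrho) as Hc. fold r c in Hc.
  assert (Hrd : dpl (fun s => rad (X0 s) (X1 s) (X2 s)) t rp).
  { unfold rad. eapply dpl_eq. apply dsqrt.
    - pose proof (rad_sq x0 x1 x2). fold r in H. fold x0 x1 x2. nra.
    - apply dplus. apply dplus. apply dpow; eauto. apply dpow; eauto. apply dpow; eauto.
    - unfold rp, r, rad. fold x0 x1 x2. simpl pred. replace (INR 2) with 2 by (simpl; ring). fold (rad x0 x1 x2). fold r. field. lra. }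
  apply dmul. apply dpow. exact Hrd.
  unfold cos_th1. apply (dcomp (assocLegendre N l) (fun s => X0 s / rad (X0 s) (X1 s) (X2 s))).
  - eapply dpl_eq. apply ddiv. fold x0 x1 x2 r. lra. exact H0. exact Hrd. fold x0 x1 x2 r. reflexivity.
  - fold x0 x1 x2 r c. apply assoc_deriv. auto.
Qed.

Lemma rho_path X1 X2 t a1 a2 : dpl X1 t a1 -> dpl X2 t a2 -> 0 < rho (X1 t) (X2 t) ->
  dpl (fun s => rho (X1 s) (X2 s)) t ((X1 t * a1 + X2 t * a2) / rho (X1 t) (X2 t)).
Proof.
  intros H1 H2 Hr. unfold rho. eapply dpl_eq. apply dsqrt.
  - pose proof (rho_sq (X1 t) (X2 t)). unfold rho in *. nra.
  - apply dplus; apply dpow; eauto.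
  - simpl pred. replace (INR 2) with 2 by (simpl; ring). fold (rho (X1 t) (X2 t)). field. lra.
Qed.

Lemma u_facts x1 x2 : 0 < rho x1 x2 ->
  (x1 / rho x1 x2) ^ 2 + (x2 / rho x1 x2) ^ 2 = 1.
Proof. intros H. pose proof (rho_sq x1 x2). field_simplify; [|lra]. rewrite <- H0. field. lra. Qed.

Lemma angular_U l X1 X2 t a1 a2 : dpl X1 t a1 -> dpl X2 t a2 -> 0 < rho (X1 t) (X2 t) ->
  let x1 := X1 t in let x2 := X2 t in let rh := rho x1 x2 in let u := x1 / rh in
  let H := chebT l u in let g := - INR l * chebU (pred l) u * (x2 / rh) in
  dpl (fun s => chebT l (cos_th2 (X1 s) (X2 s))) t ((- x2 * a1 + x1 * a2) / rh ^ 2 * g)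
  /\ g ^ 2 = INR l ^ 2 * (1 - H ^ 2) /\ H ^ 2 <= 1.
Proof.
  intros H1 H2 Hr x1 x2 rh u H g.
  pose proof (rho_sq x1 x2) as Hs. fold rh in Hs. assert (Hr' : 0 < rh) by exact Hr.
  pose proof (u_facts x1 x2 Hr) as Hu. fold rh u in Hu.
  split; [|split].
  - unfold cos_th2. eapply dpl_eq. apply (dcomp (chebT l) (fun s => X1 s / rho (X1 s) (X2 s))).
    + apply ddiv. cbv beta. fold x1 x2 rh. exact (Rgt_not_eq _ _ Hr'). exact H1.
      exact (rho_path X1 X2 t a1 a2 H1 H2 Hr).
    + cbv beta. fold x1 x2 rh u. apply chebT_deriv.
    + fold x1 x2 rh u. unfold g.
      change (rho (X1 t) (X2 t)) with rh. replace (x2 / rh) with (x2 * rh / rh ^ 2) by (field; lra). replace (x1 / rh) with (x1 * rh / rh ^ 2) at 1 by (field; lra). replace (a1 * rh - x1 * ((x1 * a1 + x2 * a2) / rh)) with ((a1 * rh ^ 2 - x1 * (x1 * a1 + x2 * a2)) / rh) by (field; lra). replace (a1 * rh ^ 2 - x1 * (x1 * a1 + x2 * a2)) with (x2 * (x2 * a1 - x1 * a2)) by (rewrite Hs; ring). field. lra.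
  - unfold g, H. destruct l as [|k].
    + simpl. ring.
    + simpl pred. pose proof (pell k u) as Hp.
      replace ((- INR (S k) * chebU k u * (x2 / rh)) ^ 2) with (INR (S k) ^ 2 * chebU k u ^ 2 * (x2 / rh) ^ 2) by ring.
      replace ((x2 / rh) ^ 2) with (1 - u ^ 2) by lra.
      replace (chebT (S k) u ^ 2) with (1 - (1 - u ^ 2) * chebU k u ^ 2) by lra. ring.
  - unfold H. destruct l as [|k].
    + rewrite cT0. lra.
    + pose proof (pell k u) as Hp. assert (0 <= (1 - u ^ 2) * chebU k u ^ 2).
      { apply Rmult_le_pos. pose proof (pow2_ge_0 (x2 / rh)). lra. apply pow2_ge_0. }
      lra.
Qed.

Lemma angular_V k X1 X2 t a1 a2 : dpl X1 t a1 -> dpl X2 t a2 -> 0 < rho (X1 t) (X2 t) ->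
  let x1 := X1 t in let x2 := X2 t in let rh := rho x1 x2 in let u := x1 / rh in
  let H := x2 / rh * chebU k u in let g := INR (S k) * chebT (S k) u in
  dpl (fun s => sin_th2 (X1 s) (X2 s) * chebU k (cos_th2 (X1 s) (X2 s))) t ((- x2 * a1 + x1 * a2) / rh ^ 2 * g)
  /\ g ^ 2 = INR (S k) ^ 2 * (1 - H ^ 2) /\ H ^ 2 <= 1.
Proof.
  intros H1 H2 Hr x1 x2 rh u H g.
  pose proof (rho_sq x1 x2) as Hs. fold rh in Hs. assert (Hr' : 0 < rh) by exact Hr.
  pose proof (u_facts x1 x2 Hr) as Hu. fold rh u in Hu.
  pose proof (pell k u) as Hp.
  split; [|split].
  - destruct (chebU_deriv k u) as [d [Hd Ed]].
    assert (Hw : dpl (fun s => X2 s / rho (X1 s) (X2 s)) t ((a2 * rh - x2 * ((x1 * a1 + x2 * a2) / rh)) / rh ^ 2)).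
    { apply ddiv. cbv beta. fold x1 x2 rh. exact (Rgt_not_eq _ _ Hr'). exact H2.
      exact (rho_path X1 X2 t a1 a2 H1 H2 Hr). }
    assert (Hu' : dpl (fun s => X1 s / rho (X1 s) (X2 s)) t ((a1 * rh - x1 * ((x1 * a1 + x2 * a2) / rh)) / rh ^ 2)).
    { apply ddiv. cbv beta. fold x1 x2 rh. exact (Rgt_not_eq _ _ Hr'). exact H1.
      exact (rho_path X1 X2 t a1 a2 H1 H2 Hr). }
    unfold sin_th2, cos_th2. eapply dpl_eq. apply dmul. exact Hw.
    apply (dcomp (chebU k) (fun s => X1 s / rho (X1 s) (X2 s))). exact Hu'. exact Hd.
    cbv beta. fold x1 x2 rh. fold u.
    replace ((a2 * rh - x2 * ((x1 * a1 + x2 * a2) / rh)) / rh ^ 2) with (x1 * (x1 * a2 - x2 * a1) / rh ^ 3).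
    2:{ replace (a2 * rh - x2 * ((x1 * a1 + x2 * a2) / rh)) with ((a2 * rh ^ 2 - x2 * (x1 * a1 + x2 * a2)) / rh) by (field; lra).
        replace (a2 * rh ^ 2 - x2 * (x1 * a1 + x2 * a2)) with (x1 * (x1 * a2 - x2 * a1)) by (rewrite Hs; ring). field. lra. }
    replace ((a1 * rh - x1 * ((x1 * a1 + x2 * a2) / rh)) / rh ^ 2) with (- x2 * (x1 * a2 - x2 * a1) / rh ^ 3).
    2:{ replace (a1 * rh - x1 * ((x1 * a1 + x2 * a2) / rh)) with ((a1 * rh ^ 2 - x1 * (x1 * a1 + x2 * a2)) / rh) by (field; lra).
        replace (a1 * rh ^ 2 - x1 * (x1 * a1 + x2 * a2)) with (- x2 * (x1 * a2 - x2 * a1)) by (rewrite Hs; ring). field. lra. }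
    unfold g. replace (INR (S k) * chebT (S k) u) with (u * chebU k u - (1 - u ^ 2) * d) by lra.
    replace (1 - u ^ 2) with ((x2 / rh) ^ 2) by lra. unfold u. field. lra.
  - unfold g, H.
    replace ((x2 / rh * chebU k u) ^ 2) with ((x2 / rh) ^ 2 * chebU k u ^ 2) by ring.
    replace ((x2 / rh) ^ 2) with (1 - u ^ 2) by lra.
    replace ((INR (S k) * chebT (S k) u) ^ 2) with (INR (S k) ^ 2 * chebT (S k) u ^ 2) by ring.
    replace (chebT (S k) u ^ 2) with (1 - (1 - u ^ 2) * chebU k u ^ 2) by lra. ring.
  - unfold H. replace ((x2 / rh * chebU k u) ^ 2) with ((x2 / rh) ^ 2 * chebU k u ^ 2) by ring.
    replace ((x2 / rh) ^ 2) with (1 - u ^ 2) by lra. pose proof (pow2_ge_0 (chebT (S k) u)). lra.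
Qed.

Definition eform (N r rn rh x0 x1 x2 P P' H g a0 a1 a2 : R) : R :=
  (N * rn * ((x0 * a0 + x1 * a1 + x2 * a2) / r) * P
    + (r * rn) * (P' * ((a0 * r - x0 * ((x0 * a0 + x1 * a1 + x2 * a2) / r)) / r ^ 2))) * H
  + (r * rn) * P * ((- x2 * a1 + x1 * a2) / rh ^ 2 * g).

Lemma grad_alg N r rn rh x0 x1 x2 P P' H g :
  0 < r -> 0 < rh -> r ^ 2 = x0 ^ 2 + x1 ^ 2 + x2 ^ 2 -> rh ^ 2 = x1 ^ 2 + x2 ^ 2 ->
  eform N r rn rh x0 x1 x2 P P' H g 1 0 0 ^ 2 + eform N r rn rh x0 x1 x2 P P' H g 0 1 0 ^ 2
  + eform N r rn rh x0 x1 x2 P P' H g 0 0 1 ^ 2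
  = rn ^ 2 * (H ^ 2 * (N ^ 2 * P ^ 2 + (rh / r) ^ 2 * P' ^ 2) + r ^ 2 * P ^ 2 * g ^ 2 / rh ^ 2).
Proof.
  intros Hr Hrh Er Erh.
  set (al := rn * P').
  set (be := rn * (N * P - x0 / r * P') / r).
  set (ga := r * rn * P * g / rh ^ 2).
  assert (E0 : eform N r rn rh x0 x1 x2 P P' H g 1 0 0 = H * (al + be * x0)).
  { unfold eform, al, be. field. lra. }
  assert (E1 : eform N r rn rh x0 x1 x2 P P' H g 0 1 0 = H * be * x1 - ga * x2).
  { unfold eform, be, ga. field. lra. }
  assert (E2 : eform N r rn rh x0 x1 x2 P P' H g 0 0 1 = H * be * x2 + ga * x1).
  { unfold eform, be, ga. field. lra. }
  rewrite E0, E1, E2.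
  transitivity (H ^ 2 * (al ^ 2 + 2 * al * be * x0 + be ^ 2 * r ^ 2) + ga ^ 2 * rh ^ 2).
  { rewrite Er, Erh. ring. }
  unfold al, be, ga.
  replace ((rh / r) ^ 2) with (rh ^ 2 / r ^ 2) by (field; lra).
  assert (rh ^ 2 <> 0) by nra. replace (rh ^ 2) with (r ^ 2 - x0 ^ 2) in * by lra. field. split; [|lra].
  intros Z. assert (rh ^ 2 = 0) by lra. nra.
Qed.

Lemma generic_bound N l x0 x1 x2 H g : (1 <= N)%nat -> (l <= N)%nat -> 0 < rho x1 x2 ->
  g ^ 2 = INR l ^ 2 * (1 - H ^ 2) -> H ^ 2 <= 1 ->
  let r := rad x0 x1 x2 in let rh := rho x1 x2 in let c := x0 / r in let Sq := sqrt (1 - c ^ 2) in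
  let P := Sq ^ l * Aj N l c in
  let P' := Sq ^ l * (Aj N (S l) c - INR l * c * Aj N l c / Sq ^ 2) in
  let e := eform (INR N) r (r ^ pred N) rh x0 x1 x2 P P' H g in
  e 1 0 0 ^ 2 + e 0 1 0 ^ 2 + e 0 0 1 ^ 2 <=
    INR N ^ 2 * (INR (fact (N + l)) / INR (fact (N - l))) * (r ^ pred N) ^ 2.
Proof.
  intros HN Hl Hrh Hg HH r rh c Sq P P' e.
  pose proof (rad_pos x0 x1 x2 Hrh) as Hr. fold r in Hr.
  pose proof (c_bound x0 x1 x2 Hrh) as Hc. fold r c in Hc.
  pose proof (rad_sq x0 x1 x2) as Er. fold r in Er.
  pose proof (rho_sq x1 x2) as Erh. fold rh in Erh.
  assert (HSq : Sq = rh / r).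
  { unfold Sq.
    assert (1 - c ^ 2 = (rh / r) ^ 2).
    { unfold c. replace ((rh / r) ^ 2) with (rh ^ 2 / r ^ 2) by (field; lra). rewrite Erh.
      replace (x1 ^ 2 + x2 ^ 2) with (r ^ 2 - x0 ^ 2) by lra. field. lra. }
    rewrite H0. apply sqrt_pow2. apply Rlt_le, Rdiv_lt_0_compat; auto. }
  unfold e. rewrite grad_alg; auto.
  destruct (leg_bound N l c HN Hl Hc) as [B1 B2]. fold Sq P P' in B1, B2.
  set (M := INR (fact (N + l)) / INR (fact (N - l))) in *.
  rewrite <- HSq.
  assert (HSp : 0 < Sq) by (rewrite HSq; apply Rdiv_lt_0_compat; auto).
  replace (r ^ 2 * P ^ 2 * g ^ 2 / rh ^ 2) with ((1 - H ^ 2) * (INR l ^ 2 * P ^ 2 / Sq ^ 2)).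
  2:{ rewrite Hg, HSq. field. assert (0 < rh) by exact Hrh. split; lra. }
  assert (0 <= H ^ 2) by apply pow2_ge_0.
  set (X := INR N ^ 2 * P ^ 2 + Sq ^ 2 * P' ^ 2) in *.
  set (Y := INR l ^ 2 * P ^ 2 / Sq ^ 2) in *.
  assert (H ^ 2 * X + (1 - H ^ 2) * Y <= INR N ^ 2 * M).
  { assert (H ^ 2 * X <= H ^ 2 * (INR N ^ 2 * M)) by (apply Rmult_le_compat_l; auto).
    assert ((1 - H ^ 2) * Y <= (1 - H ^ 2) * (INR N ^ 2 * M)) by (apply Rmult_le_compat_l; lra).
    lra. }
  replace (INR N ^ 2 * M * (r ^ pred N) ^ 2) with ((r ^ pred N) ^ 2 * (INR N ^ 2 * M)) by ring.
  apply Rmult_le_compat_l; [apply pow2_ge_0|]. auto.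
Qed.

Lemma pow_pred r N : (1 <= N)%nat -> r ^ N = r * r ^ pred N.
Proof. intros H. destruct N; [lia|]. reflexivity. Qed.

Lemma path_U N l X0 X1 X2 t a0 a1 a2 : (1 <= N)%nat ->
  dpl X0 t a0 -> dpl X1 t a1 -> dpl X2 t a2 -> 0 < rho (X1 t) (X2 t) ->
  let x0 := X0 t in let x1 := X1 t in let x2 := X2 t in
  let r := rad x0 x1 x2 in let rh := rho x1 x2 in let c := x0 / r in let Sq := sqrt (1 - c ^ 2) in
  let P := Sq ^ l * Aj N l c in
  let P' := Sq ^ l * (Aj N (S l) c - INR l * c * Aj N l c / Sq ^ 2) in
  let u := x1 / rh in
  let H := chebT l u in let g := - INR l * chebU (pred l) u * (x2 / rh) in
  dpl (fun s => solidU N l (X0 s) (X1 s) (X2 s)) t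
    (eform (INR N) r (r ^ pred N) rh x0 x1 x2 P P' H g a0 a1 a2).
Proof.
  intros HN H0 H1 H2 Hrh x0 x1 x2 r rh c Sq P P' u H g.
  destruct (angular_U l X1 X2 t a1 a2 H1 H2 Hrh) as [DA _].
  pose proof (radial_path N l X0 X1 X2 t a0 a1 a2 H0 H1 H2 Hrh) as DR.
  apply (dpl_ext (fun s => (rad (X0 s) (X1 s) (X2 s) ^ N * assocLegendre N l (cos_th1 (X0 s) (X1 s) (X2 s)))
                            * chebT l (cos_th2 (X1 s) (X2 s)))).
  { intros s. unfold solidU, Usph. ring. }
  eapply dpl_eq. apply dmul. exact DR. exact DA.
  cbv beta. fold x0 x1 x2 r rh. fold c Sq. fold P P' u H g.
  unfold eform. rewrite (pow_pred r N HN). unfold cos_th2. fold x1 x2 rh u H.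
  unfold cos_th1. fold x0 x1 x2 r c. unfold assocLegendre. fold Sq. fold (Aj N l c). fold P. ring.
Qed.

Lemma path_V N k X0 X1 X2 t a0 a1 a2 : (1 <= N)%nat ->
  dpl X0 t a0 -> dpl X1 t a1 -> dpl X2 t a2 -> 0 < rho (X1 t) (X2 t) ->
  let x0 := X0 t in let x1 := X1 t in let x2 := X2 t in
  let r := rad x0 x1 x2 in let rh := rho x1 x2 in let c := x0 / r in let Sq := sqrt (1 - c ^ 2) in
  let P := Sq ^ S k * Aj N (S k) c in
  let P' := Sq ^ S k * (Aj N (S (S k)) c - INR (S k) * c * Aj N (S k) c / Sq ^ 2) in
  let u := x1 / rh in
  let H := x2 / rh * chebU k u in let g := INR (S k) * chebT (S k) u in
  dpl (fun s => solidV N (S k) (X0 s) (X1 s) (X2 s)) t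
    (eform (INR N) r (r ^ pred N) rh x0 x1 x2 P P' H g a0 a1 a2).
Proof.
  intros HN H0 H1 H2 Hrh x0 x1 x2 r rh c Sq P P' u H g.
  destruct (angular_V k X1 X2 t a1 a2 H1 H2 Hrh) as [DA _].
  pose proof (radial_path N (S k) X0 X1 X2 t a0 a1 a2 H0 H1 H2 Hrh) as DR.
  apply (dpl_ext (fun s => (rad (X0 s) (X1 s) (X2 s) ^ N * assocLegendre N (S k) (cos_th1 (X0 s) (X1 s) (X2 s)))
                            * (sin_th2 (X1 s) (X2 s) * chebU k (cos_th2 (X1 s) (X2 s))))).
  { intros s. unfold solidV, Vsph. replace (S k - 1)%nat with k by lia. ring. }
  eapply dpl_eq. apply dmul. exact DR. exact DA.
  cbv beta. fold x0 x1 x2 r rh. fold c Sq. fold P P' u H g.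
  unfold eform. rewrite (pow_pred r N HN). unfold cos_th2, sin_th2. fold x1 x2 rh u H.
  unfold cos_th1. fold x0 x1 x2 r c. unfold assocLegendre. fold Sq. fold (Aj N (S k) c). fold P. ring.
Qed.

Definition Bnd (N l : nat) (x0 x1 x2 : R) : R :=
  INR N ^ 2 * (INR (fact (N + l)) / INR (fact (N - l))) * (rad x0 x1 x2 ^ pred N) ^ 2.

Lemma generic_U N l x0 x1 x2 d0 d1 d2 : (1 <= N)%nat -> (l <= N)%nat -> 0 < rho x1 x2 ->
  dpl (fun t => solidU N l t x1 x2) x0 d0 ->
  dpl (fun t => solidU N l x0 t x2) x1 d1 ->
  dpl (fun t => solidU N l x0 x1 t) x2 d2 ->
  d0 ^ 2 + d1 ^ 2 + d2 ^ 2 <= Bnd N l x0 x1 x2.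
Proof.
  intros HN Hl Hrh D0 D1 D2.
  pose proof (path_U N l (fun s => s) (fun _ => x1) (fun _ => x2) x0 1 0 0 HN (did x0) (dcst x1 x0) (dcst x2 x0) Hrh) as E0.
  pose proof (path_U N l (fun _ => x0) (fun s => s) (fun _ => x2) x1 0 1 0 HN (dcst x0 x1) (did x1) (dcst x2 x1) Hrh) as E1.
  pose proof (path_U N l (fun _ => x0) (fun _ => x1) (fun s => s) x2 0 0 1 HN (dcst x0 x2) (dcst x1 x2) (did x2) Hrh) as E2.
  cbv beta zeta in E0, E1, E2.
  rewrite (uniqueness_limite _ _ _ _ D0 E0), (uniqueness_limite _ _ _ _ D1 E1), (uniqueness_limite _ _ _ _ D2 E2).
  set (u := x1 / rho x1 x2).
  destruct (angular_U l (fun _ => x1) (fun _ => x2) 0 0 0 (dcst x1 0) (dcst x2 0) Hrh) as [_ [Hg HH]].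
  cbv beta zeta in Hg, HH.
  pose proof (generic_bound N l x0 x1 x2 _ _ HN Hl Hrh Hg HH) as B.
  cbv zeta in B. unfold Bnd. exact B.
Qed.

Lemma generic_V N k x0 x1 x2 d0 d1 d2 : (1 <= N)%nat -> (S k <= N)%nat -> 0 < rho x1 x2 ->
  dpl (fun t => solidV N (S k) t x1 x2) x0 d0 ->
  dpl (fun t => solidV N (S k) x0 t x2) x1 d1 ->
  dpl (fun t => solidV N (S k) x0 x1 t) x2 d2 ->
  d0 ^ 2 + d1 ^ 2 + d2 ^ 2 <= Bnd N (S k) x0 x1 x2.
Proof.
  intros HN Hl Hrh D0 D1 D2.
  pose proof (path_V N k (fun s => s) (fun _ => x1) (fun _ => x2) x0 1 0 0 HN (did x0) (dcst x1 x0) (dcst x2 x0) Hrh) as E0.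
  pose proof (path_V N k (fun _ => x0) (fun s => s) (fun _ => x2) x1 0 1 0 HN (dcst x0 x1) (did x1) (dcst x2 x1) Hrh) as E1.
  pose proof (path_V N k (fun _ => x0) (fun _ => x1) (fun s => s) x2 0 0 1 HN (dcst x0 x2) (dcst x1 x2) (did x2) Hrh) as E2.
  cbv beta zeta in E0, E1, E2.
  rewrite (uniqueness_limite _ _ _ _ D0 E0), (uniqueness_limite _ _ _ _ D1 E1), (uniqueness_limite _ _ _ _ D2 E2).
  destruct (angular_V k (fun _ => x1) (fun _ => x2) 0 0 0 (dcst x1 0) (dcst x2 0) Hrh) as [_ [Hg HH]].
  cbv beta zeta in Hg, HH.
  pose proof (generic_bound N (S k) x0 x1 x2 _ _ HN Hl Hrh Hg HH) as B.
  cbv zeta in B. unfold Bnd. exact B.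
Qed.

Lemma cont_of_dpl f x l : dpl f x l -> continuity_pt f x.
Proof. intros H. apply derivable_continuous_pt. exists l. exact H. Qed.

Lemma cont_eps K x : continuity_pt K x -> forall eps, 0 < eps ->
  exists del, 0 < del /\ forall t, Rabs (t - x) < del -> Rabs (K t - K x) < eps.
Proof.
  intros H eps Heps. destruct (H eps Heps) as [del [Hdel Hd]]. exists del. split; auto.
  intros t Ht. destruct (Req_dec t x) as [E|E].
  - subst. unfold Rminus. rewrite Rplus_opp_r, Rabs_R0. auto.
  - apply (Hd t). split. split; [exact I|auto]. simpl. unfold R_dist. auto.
Qed.

Lemma even_zero g d : (forall t, g (- t) = g t) -> dpl g 0 d -> d = 0.
Proof.
  intros E H.
  assert (H2 : dpl (fun t => g (- t)) 0 (d * -1)).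
  { apply dcomp. eapply dpl_eq. apply (derivable_pt_lim_opp (fun t => t)). apply did. reflexivity.
    rewrite Ropp_0. exact H. }
  assert (d = d * -1).
  { apply (uniqueness_limite g 0). exact H. eapply dpl_ext; [|exact H2]. intros; apply E. }
  lra.
Qed.

Lemma deriv_bound_limit (g K : R -> R) d :
  dpl g 0 d -> continuity_pt K 0 ->
  (forall t, t <> 0 -> exists e, dpl g t e /\ Rabs e <= K t) ->
  (forall s t, Rabs s <= Rabs t -> K s <= K t) ->
  Rabs d <= K 0.
Proof.
  intros Hd HK Hg Hm.
  destruct (Rle_dec (Rabs d) (K 0)) as [ok|nok]; auto. exfalso.
  set (eps := (Rabs d - K 0) / 2).
  assert (Heps : 0 < eps) by (unfold eps; lra).
  destruct (cont_eps K 0 HK eps Heps) as [d1 [Hd1 HK1]].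
  destruct (Hd eps Heps) as [d2 Hd2].
  set (h := Rmin d1 d2 / 2).
  assert (Hh : 0 < h) by (unfold h; pose proof (cond_pos d2); unfold Rmin; destruct (Rle_dec d1 d2); lra).
  assert (Hh1 : h < d1) by (unfold h; unfold Rmin; destruct (Rle_dec d1 d2); pose proof (cond_pos d2); lra).
  assert (Hh2 : h < d2) by (unfold h; unfold Rmin; destruct (Rle_dec d1 d2); pose proof (cond_pos d2); lra).
  set (f' := fun c => match Req_EM_T c 0 with
                      | left _ => d
                      | right Hc => proj1_sig (constructive_indefinite_description _ (Hg c Hc)) end).
  assert (Hf' : forall c, 0 <= c <= h -> dpl g c (f' c)).
  { intros c _. unfold f'. destruct (Req_EM_T c 0) as [E|E].
    - subst; auto.
    - exact (proj1 (proj2_sig (constructive_indefinite_description _ (Hg c E)))). }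
  destruct (MVT_cor2 g f' 0 h Hh Hf') as [c [Ec Hc]].
  assert (Hfc : Rabs (f' c) <= K h).
  { unfold f'. destruct (Req_EM_T c 0) as [E|E]. lra.
    apply (Rle_trans _ (K c)). exact (proj2 (proj2_sig (constructive_indefinite_description _ (Hg c E)))). apply Hm. rewrite !Rabs_pos_eq; lra. }
  assert (HKh : K h < K 0 + eps).
  { pose proof (HK1 h ltac:(rewrite Rminus_0_r, Rabs_pos_eq; lra)). apply Rabs_def2 in H. lra. }
  assert (Hq : Rabs ((g (0 + h) - g 0) / h - d) < eps).
  { apply Hd2. lra. rewrite Rabs_pos_eq; lra. }
  rewrite Rplus_0_l, Ec in Hq. replace (f' c * (h - 0) / h) with (f' c) in Hq by (field; lra).
  assert (Rabs d <= Rabs (f' c) + Rabs (f' c - d)).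
  { replace d with (f' c - (f' c - d)) at 1 by ring. 
    eapply Rle_trans. apply Rabs_triang. rewrite Rabs_Ropp. lra. }
  unfold eps in *. lra.
Qed.

Lemma sq_neg t : (- t) ^ 2 = t ^ 2.
Proof. ring. Qed.

Lemma solidU_even2 N l x0 x1 t : solidU N l x0 x1 (- t) = solidU N l x0 x1 t.
Proof. unfold solidU, Usph, cos_th1, cos_th2, rad, rho. rewrite sq_neg. reflexivity. Qed.

Lemma solidU0_even1 N x0 t x2 : solidU N 0 x0 (- t) x2 = solidU N 0 x0 t x2.
Proof. unfold solidU, Usph, cos_th1, rad. rewrite !cT0, sq_neg. reflexivity. Qed.

Lemma solidV_axis1 N m x0 t : solidV N m x0 t 0 = 0.
Proof. unfold solidV, Vsph, sin_th2. unfold Rdiv. ring. Qed.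

Lemma rad_axis t : rad t 0 0 = Rabs t.
Proof. unfold rad. replace (t ^ 2 + 0 ^ 2 + 0 ^ 2) with (t ^ 2) by ring. rewrite <- sqrt_Rsqr_abs. unfold Rsqr. f_equal. ring. Qed.

Lemma axis_zero N l t : (1 <= N)%nat -> (1 <= l)%nat ->
  rad t 0 0 ^ N * assocLegendre N l (cos_th1 t 0 0) = 0.
Proof.
  intros HN Hl. destruct (Req_dec t 0) as [E|E].
  - subst. rewrite rad_axis, Rabs_R0. rewrite pow_i by lia. ring.
  - unfold assocLegendre, cos_th1. rewrite rad_axis.
    replace (1 - (t / Rabs t) ^ 2) with 0.
    + rewrite sqrt_0. rewrite pow_i by lia. ring.
    + assert (Rabs t <> 0) by (apply Rabs_no_R0; auto).
      replace ((t / Rabs t) ^ 2) with (t ^ 2 / Rabs t ^ 2) by (field; auto).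
      rewrite pow2_abs. field. intro Z. apply E. nra.
Qed.

Lemma solidU_axis0 N l t : (1 <= N)%nat -> (1 <= l)%nat -> solidU N l t 0 0 = 0.
Proof. intros. unfold solidU, Usph. rewrite <- Rmult_assoc, axis_zero; auto. ring. Qed.

Lemma solidV_axis0 N l t : (1 <= N)%nat -> (1 <= l)%nat -> solidV N l t 0 0 = 0.
Proof. intros. unfold solidV, Vsph. rewrite <- !Rmult_assoc, axis_zero; auto. ring. Qed.

Lemma solidU0_axis N t : (1 <= N)%nat -> solidU N 0 t 0 0 = t ^ N.
Proof.
  intros HN. unfold solidU, Usph, assocLegendre, cos_th1. rewrite cT0, rad_axis.
  destruct (leg_one N) as [P1 Pm1]. unfold Aj in P1, Pm1. simpl Nat.iter in *.
  destruct (Rtotal_order t 0) as [L|[E|G]].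
  - rewrite Rabs_left by auto. replace (t / - t) with (-1) by (field; lra). rewrite Pm1.
    replace (- t) with ((-1) * t) by ring. rewrite Rpow_mult_distr. simpl pow at 2. 
    rewrite pow_O. replace ((-1) ^ N * t ^ N * (1 * (-1) ^ N * 1)) with (((-1) ^ N * (-1) ^ N) * t ^ N) by ring. rewrite <- Rpow_mult_distr. replace (-1 * -1) with 1 by ring. rewrite pow1. ring.
  - subst. rewrite Rabs_R0. rewrite pow_i by lia. ring.
  - rewrite Rabs_right by lra. replace (t / t) with 1 by (field; lra). rewrite P1. simpl. ring.
Qed.

Lemma exists_dir1_U N l x0 x1 x2 : (1 <= N)%nat -> (l <= N)%nat -> 0 < rho x1 x2 ->
  exists e, dpl (fun s => solidU N l x0 s x2) x1 e /\ e ^ 2 <= Bnd N l x0 x1 x2.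
Proof.
  intros HN Hl Hrh.
  pose proof (path_U N l (fun s => s) (fun _ => x1) (fun _ => x2) x0 1 0 0 HN (did x0) (dcst x1 x0) (dcst x2 x0) Hrh) as E0.
  pose proof (path_U N l (fun _ => x0) (fun s => s) (fun _ => x2) x1 0 1 0 HN (dcst x0 x1) (did x1) (dcst x2 x1) Hrh) as E1.
  pose proof (path_U N l (fun _ => x0) (fun _ => x1) (fun s => s) x2 0 0 1 HN (dcst x0 x2) (dcst x1 x2) (did x2) Hrh) as E2.
  cbv beta zeta in E0, E1, E2.
  eexists. split. exact E1.
  pose proof (generic_U N l x0 x1 x2 _ _ _ HN Hl Hrh E0 E1 E2).
  pose proof (pow2_ge_0 (eform (INR N) (rad x0 x1 x2) (rad x0 x1 x2 ^ Init.Nat.pred N) (rho x1 x2) x0 x1 x2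
           (sqrt (1 - (x0 / rad x0 x1 x2) ^ 2) ^ l * Aj N l (x0 / rad x0 x1 x2))
           (sqrt (1 - (x0 / rad x0 x1 x2) ^ 2) ^ l *
            (Aj N (S l) (x0 / rad x0 x1 x2) -
             INR l * (x0 / rad x0 x1 x2) * Aj N l (x0 / rad x0 x1 x2) /
             sqrt (1 - (x0 / rad x0 x1 x2) ^ 2) ^ 2)) (chebT l (x1 / rho x1 x2))
           (- INR l * chebU (Init.Nat.pred l) (x1 / rho x1 x2) * (x2 / rho x1 x2)) 1 0 0)).
  pose proof (pow2_ge_0 (eform (INR N) (rad x0 x1 x2) (rad x0 x1 x2 ^ Init.Nat.pred N) (rho x1 x2) x0 x1 x2
           (sqrt (1 - (x0 / rad x0 x1 x2) ^ 2) ^ l * Aj N l (x0 / rad x0 x1 x2))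
           (sqrt (1 - (x0 / rad x0 x1 x2) ^ 2) ^ l *
            (Aj N (S l) (x0 / rad x0 x1 x2) -
             INR l * (x0 / rad x0 x1 x2) * Aj N l (x0 / rad x0 x1 x2) /
             sqrt (1 - (x0 / rad x0 x1 x2) ^ 2) ^ 2)) (chebT l (x1 / rho x1 x2))
           (- INR l * chebU (Init.Nat.pred l) (x1 / rho x1 x2) * (x2 / rho x1 x2)) 0 0 1)).
  lra.
Qed.

Lemma sum3_2 a b c B : a ^ 2 + b ^ 2 + c ^ 2 <= B -> b ^ 2 <= B.
Proof. intros. pose proof (pow2_ge_0 a). pose proof (pow2_ge_0 c). lra. Qed.
Lemma sum3_3 a b c B : a ^ 2 + b ^ 2 + c ^ 2 <= B -> c ^ 2 <= B.
Proof. intros. pose proof (pow2_ge_0 a). pose proof (pow2_ge_0 b). lra. Qed.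

Lemma exists_dir2_V N k x0 x1 x2 : (1 <= N)%nat -> (S k <= N)%nat -> 0 < rho x1 x2 ->
  exists e, dpl (fun s => solidV N (S k) x0 x1 s) x2 e /\ e ^ 2 <= Bnd N (S k) x0 x1 x2.
Proof.
  intros HN Hl Hrh.
  pose proof (path_V N k (fun s => s) (fun _ => x1) (fun _ => x2) x0 1 0 0 HN (did x0) (dcst x1 x0) (dcst x2 x0) Hrh) as E0.
  pose proof (path_V N k (fun _ => x0) (fun s => s) (fun _ => x2) x1 0 1 0 HN (dcst x0 x1) (did x1) (dcst x2 x1) Hrh) as E1.
  pose proof (path_V N k (fun _ => x0) (fun _ => x1) (fun s => s) x2 0 0 1 HN (dcst x0 x2) (dcst x1 x2) (did x2) Hrh) as E2.
  cbv beta zeta in E0, E1, E2.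
  eexists. split. exact E2.
  exact (sum3_3 _ _ _ _ (generic_V N k x0 x1 x2 _ _ _ HN Hl Hrh E0 E1 E2)).
Qed.

Definition Kf (N l : nat) (r : R) : R :=
  INR N * sqrt (INR (fact (N + l)) / INR (fact (N - l))) * r ^ pred N.

Lemma M_nonneg N l : 0 <= INR (fact (N + l)) / INR (fact (N - l)).
Proof. apply Rlt_le, Rdiv_lt_0_compat; apply fact_pos_R. Qed.

Lemma Bnd_Kf N l x0 x1 x2 : Bnd N l x0 x1 x2 = Kf N l (rad x0 x1 x2) ^ 2.
Proof.
  unfold Bnd, Kf. rewrite !Rpow_mult_distr. rewrite pow2_sqrt by apply M_nonneg. ring.
Qed.

Lemma Kf_nonneg N l r : 0 <= r -> 0 <= Kf N l r.
Proof.
  intros. unfold Kf. apply Rmult_le_pos; [apply Rmult_le_pos|]; [apply pos_INR| apply sqrt_pos| apply pow_le; auto].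
Qed.

Lemma abs_le_Kf e N l x0 x1 x2 : e ^ 2 <= Bnd N l x0 x1 x2 -> Rabs e <= Kf N l (rad x0 x1 x2).
Proof.
  intros H. rewrite Bnd_Kf in H. pose proof (Kf_nonneg N l (rad x0 x1 x2) (rad_nonneg _ _ _)).
  rewrite <- (Rabs_pos_eq (Kf N l (rad x0 x1 x2))) by auto.
  refine (Rsqr_le_abs_0 _ _ _). unfold Rsqr. simpl in H. lra.
Qed.

Lemma Kf_mono N l x0 s t : Rabs s <= Rabs t -> Kf N l (rad x0 s 0) <= Kf N l (rad x0 t 0).
Proof.
  intros H. unfold Kf. apply Rmult_le_compat_l.
  - apply Rmult_le_pos; [apply pos_INR| apply sqrt_pos].
  - apply pow_incr. split. apply rad_nonneg. unfold rad. apply sqrt_le_1_alt.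
    rewrite <- (pow2_abs s), <- (pow2_abs t). pose proof (Rabs_pos s). nra.
Qed.

Lemma Kf_mono2 N l x0 s t : Rabs s <= Rabs t -> Kf N l (rad x0 0 s) <= Kf N l (rad x0 0 t).
Proof.
  intros H. unfold Kf. apply Rmult_le_compat_l.
  - apply Rmult_le_pos; [apply pos_INR| apply sqrt_pos].
  - apply pow_incr. split. apply rad_nonneg. unfold rad. apply sqrt_le_1_alt.
    rewrite <- (pow2_abs s), <- (pow2_abs t). pose proof (Rabs_pos s). nra.
Qed.

Lemma Kf_cont N l x0 : continuity_pt (fun t => Kf N l (rad x0 t 0)) 0.
Proof.
  unfold Kf. apply continuity_pt_mult.
  - apply continuity_pt_const. intros a b; reflexivity.
  - unfold rad.
    apply (continuity_pt_comp (fun t => sqrt (x0 ^ 2 + t ^ 2 + 0 ^ 2)) (fun y => y ^ pred N)).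
    + apply (continuity_pt_comp (fun t => x0 ^ 2 + t ^ 2 + 0 ^ 2) sqrt).
      * eapply cont_of_dpl. apply dplus. apply dplus. apply dcst. apply dpow. apply did. apply dcst.
      * apply continuity_pt_sqrt. nra.
    + eapply cont_of_dpl. apply derivable_pt_lim_pow.
Qed.

Lemma Kf_cont2 N l x0 : continuity_pt (fun t => Kf N l (rad x0 0 t)) 0.
Proof.
  unfold Kf. apply continuity_pt_mult.
  - apply continuity_pt_const. intros a b; reflexivity.
  - unfold rad.
    apply (continuity_pt_comp (fun t => sqrt (x0 ^ 2 + 0 ^ 2 + t ^ 2)) (fun y => y ^ pred N)).
    + apply (continuity_pt_comp (fun t => x0 ^ 2 + 0 ^ 2 + t ^ 2) sqrt).
      * eapply cont_of_dpl. apply dplus. apply dplus. apply dcst. apply dcst. apply dpow. apply did.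
      * apply continuity_pt_sqrt. nra.
    + eapply cont_of_dpl. apply derivable_pt_lim_pow.
Qed.

Lemma rho_pos_t t : t <> 0 -> 0 < rho t 0.
Proof. intros. unfold rho. apply sqrt_lt_R0. nra. Qed.
Lemma rho_pos_t2 t : t <> 0 -> 0 < rho 0 t.
Proof. intros. unfold rho. apply sqrt_lt_R0. nra. Qed.

Lemma axis_U_d1 N l x0 d : (1 <= N)%nat -> (l <= N)%nat ->
  dpl (fun t => solidU N l x0 t 0) 0 d -> Rabs d <= Kf N l (rad x0 0 0).
Proof.
  intros HN Hl Hd.
  apply (deriv_bound_limit (fun t => solidU N l x0 t 0) (fun t => Kf N l (rad x0 t 0)) d Hd).
  - apply Kf_cont.
  - intros t Ht. destruct (exists_dir1_U N l x0 t 0 HN Hl (rho_pos_t t Ht)) as [e [He Hb]].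
    exists e. split; auto. apply abs_le_Kf. auto.
  - intros; apply Kf_mono; auto.
Qed.

Lemma axis_V_d2 N k x0 d : (1 <= N)%nat -> (S k <= N)%nat ->
  dpl (fun t => solidV N (S k) x0 0 t) 0 d -> Rabs d <= Kf N (S k) (rad x0 0 0).
Proof.
  intros HN Hl Hd.
  apply (deriv_bound_limit (fun t => solidV N (S k) x0 0 t) (fun t => Kf N (S k) (rad x0 0 t)) d Hd).
  - apply Kf_cont2.
  - intros t Ht. destruct (exists_dir2_V N k x0 0 t HN Hl (rho_pos_t2 t Ht)) as [e [He Hb]].
    exists e. split; auto. apply abs_le_Kf. auto.
  - intros; apply Kf_mono2; auto.
Qed.

Lemma final_reduce d0 d1 d2 N l r n : pred N = n -> 0 <= r ->
  d0 ^ 2 + d1 ^ 2 + d2 ^ 2 <= Kf N l r ^ 2 ->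
  qnorm (qscale (/ 2) (Dbar_val d0 d1 d2))
    <= / 2 * INR N * sqrt (INR (fact (N + l)) / INR (fact (N - l))) * r ^ n.
Proof.
  intros Hn Hr H. unfold Kf in H. rewrite Hn in H.
  set (B := INR N * sqrt (INR (fact (N + l)) / INR (fact (N - l))) * r ^ n) in *.
  assert (HB : 0 <= B) by (unfold B; apply Rmult_le_pos; [apply Rmult_le_pos|]; [apply pos_INR|apply sqrt_pos|apply pow_le; auto]).
  replace (/ 2 * INR N * sqrt (INR (fact (N + l)) / INR (fact (N - l))) * r ^ n) with (/ 2 * B) by (unfold B; ring).
  unfold qnorm, qscale, Dbar_val.
  rewrite <- (sqrt_pow2 (/ 2 * B)) by lra.
  apply sqrt_le_1_alt. replace ((/ 2 * B) ^ 2) with (/ 4 * B ^ 2) by field.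
  replace ((/ 2 * d0) ^ 2 + (/ 2 * - d1) ^ 2 + (/ 2 * - d2) ^ 2 + (/ 2 * 0) ^ 2) with (/ 4 * (d0 ^ 2 + d1 ^ 2 + d2 ^ 2)) by field.
  lra.
Qed.

Lemma rho_zero x1 x2 : ~ 0 < rho x1 x2 -> x1 = 0 /\ x2 = 0.
Proof.
  intros H. pose proof (rho_nonneg x1 x2). assert (rho x1 x2 = 0) by lra.
  pose proof (rho_sq x1 x2). rewrite H1 in H2. split; nra.
Qed.

Lemma abs_sq d K : Rabs d <= K -> d ^ 2 <= K ^ 2.
Proof. intros H. rewrite <- (pow2_abs d). pose proof (Rabs_pos d). nra. Qed.

Lemma U_main N l x0 x1 x2 d0 d1 d2 : (1 <= N)%nat -> (l <= N)%nat ->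
  dpl (fun t => solidU N l t x1 x2) x0 d0 ->
  dpl (fun t => solidU N l x0 t x2) x1 d1 ->
  dpl (fun t => solidU N l x0 x1 t) x2 d2 ->
  d0 ^ 2 + d1 ^ 2 + d2 ^ 2 <= Kf N l (rad x0 x1 x2) ^ 2.
Proof.
  intros HN Hl D0 D1 D2.
  destruct (Rlt_dec 0 (rho x1 x2)) as [Hr|Hr].
  - rewrite <- Bnd_Kf. apply generic_U; auto.
  - destruct (rho_zero x1 x2 Hr) as [-> ->].
    assert (E2 : d2 = 0).
    { apply (even_zero (fun t => solidU N l x0 0 t)); auto. intros; apply solidU_even2. }
    subst d2.
    destruct l as [|k].
    + assert (E1 : d1 = 0).
      { apply (even_zero (fun t => solidU N 0 x0 t 0)); auto. intros; apply solidU0_even1. }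
      subst d1.
      assert (E0 : d0 = INR N * x0 ^ pred N).
      { apply (uniqueness_limite (fun t => solidU N 0 t 0 0) x0); auto.
        eapply dpl_ext. intros t. symmetry. apply solidU0_axis; auto.
        eapply dpl_eq. apply dpow. apply did. cbv beta. ring. }
      subst d0. unfold Kf. rewrite rad_axis. rewrite Nat.add_0_r, Nat.sub_0_r.
      replace (INR (fact N) / INR (fact N)) with 1 by (pose proof (fact_pos_R N); field; lra).
      rewrite sqrt_1. rewrite RPow_abs.
      replace ((INR N * 1 * Rabs (x0 ^ pred N)) ^ 2) with (INR N ^ 2 * (Rabs (x0 ^ pred N)) ^ 2) by ring.
      rewrite pow2_abs. right. ring.
    + assert (E0 : d0 = 0).
      { apply (dzero (fun t => solidU N (S k) t 0 0) x0); auto. intros; apply solidU_axis0; auto; lia. }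
      subst d0.
      pose proof (axis_U_d1 N (S k) x0 d1 HN Hl D1) as B.
      pose proof (abs_sq _ _ B). lra.
Qed.

Lemma V_main N k x0 x1 x2 d0 d1 d2 : (1 <= N)%nat -> (S k <= N)%nat ->
  dpl (fun t => solidV N (S k) t x1 x2) x0 d0 ->
  dpl (fun t => solidV N (S k) x0 t x2) x1 d1 ->
  dpl (fun t => solidV N (S k) x0 x1 t) x2 d2 ->
  d0 ^ 2 + d1 ^ 2 + d2 ^ 2 <= Kf N (S k) (rad x0 x1 x2) ^ 2.
Proof.
  intros HN Hl D0 D1 D2.
  destruct (Rlt_dec 0 (rho x1 x2)) as [Hr|Hr].
  - rewrite <- Bnd_Kf. apply generic_V; auto.
  - destruct (rho_zero x1 x2 Hr) as [-> ->].
    assert (E0 : d0 = 0).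
    { apply (dzero (fun t => solidV N (S k) t 0 0) x0); auto. intros; apply solidV_axis0; auto; lia. }
    assert (E1 : d1 = 0).
    { apply (dzero (fun t => solidV N (S k) x0 t 0) 0); auto. intros; apply solidV_axis1. }
    subst d0 d1.
    pose proof (axis_V_d2 N k x0 d2 HN Hl D2) as B.
    pose proof (abs_sq _ _ B). lra.
Qed.

Theorem proposition3 :
  forall (n : nat) (x0 x1 x2 : R),
    (forall l : nat, (l <= n + 1)%nat ->
       forall d0 d1 d2 : R,
         derivable_pt_lim (fun t => solidU (n + 1) l t x1 x2) x0 d0 ->
         derivable_pt_lim (fun t => solidU (n + 1) l x0 t x2) x1 d1 ->
         derivable_pt_lim (fun t => solidU (n + 1) l x0 x1 t) x2 d2 ->
         qnorm (qscale (/ 2) (Dbar_val d0 d1 d2))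
           <= / 2 * INR (n + 1)
              * sqrt (INR (fact (n + 1 + l)) / INR (fact (n + 1 - l)))
              * rad x0 x1 x2 ^ n)
    /\
    (forall m : nat, (1 <= m)%nat -> (m <= n + 1)%nat ->
       forall d0 d1 d2 : R,
         derivable_pt_lim (fun t => solidV (n + 1) m t x1 x2) x0 d0 ->
         derivable_pt_lim (fun t => solidV (n + 1) m x0 t x2) x1 d1 ->
         derivable_pt_lim (fun t => solidV (n + 1) m x0 x1 t) x2 d2 ->
         qnorm (qscale (/ 2) (Dbar_val d0 d1 d2))
           <= / 2 * INR (n + 1)
              * sqrt (INR (fact (n + 1 + m)) / INR (fact (n + 1 - m)))
              * rad x0 x1 x2 ^ n).
Proof.
  intros n x0 x1 x2. split.
  - intros l Hl d0 d1 d2 D0 D1 D2.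
    apply final_reduce; [lia| apply rad_nonneg|].
    apply U_main; auto. lia.
  - intros m Hm1 Hm d0 d1 d2 D0 D1 D2.
    apply final_reduce; [lia| apply rad_nonneg|].
    destruct m as [|k]; [lia|].
    apply V_main; auto. lia.
Qed.
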